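(* Let $N=1$, $A_0,A_1\in\mathbb{C}^{n\times n}$, $u_0\in\mathbb{C}^n$, $t\ge0$, $\varepsilon\in\mathbb{C}$ and $k\ge1$. Then $$\Big\|u(t,\varepsilon)-\sum_{\ell=0}^{k-1}\varepsilon^\ell c_\ell(t)\Big\|\le\frac{e^{t(\mu(A_0)+|\varepsilon|\|A_1\|)}\,\big(|\varepsilon|\,\|tA_1\|\big)^k}{k!}\,\|u_0\|.$$
   Context: $\|\cdot\|$ is the Euclidean norm and induced spectral norm. $u(t,\varepsilon):=\exp(t(A_0+\varepsilon A_1))u_0=\sum_{\ell\ge0}\varepsilon^\ell c_\ell(t)$ is the Taylor expansion in $\varepsilon$. $\mu(B):=\max\Lambda((B+B^* )/2)$ is the logarithmic norm. *)

(* Defs.v *)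
From Stdlib Require Import Reals Lra Lia Arith Factorial.
Open Scope R_scope.

Definition Cx : Type := (R * R)%type.
Definition C0 : Cx := (0, 0).
Definition RtoC (r : R) : Cx := (r, 0).
Definition Cadd (a b : Cx) : Cx := (fst a + fst b, snd a + snd b).
Definition Copp (a : Cx) : Cx := (- fst a, - snd a).
Definition Cmul (a b : Cx) : Cx :=
  (fst a * fst b - snd a * snd b, fst a * snd b + snd a * fst b).
Definition Cconj (a : Cx) : Cx := (fst a, - snd a).
Definition Cmod (a : Cx) : R := sqrt (fst a ^ 2 + snd a ^ 2).
Fixpoint Cpow (a : Cx) (k : nat) : Cx :=
  match k with O => RtoC 1 | S k' => Cmul a (Cpow a k') end.

Fixpoint Csum (N : nat) (f : nat -> Cx) : Cx :=
  match N with O => C0 | S N' => Cadd (Csum N' f) (f N') end.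

(* Vectors in C^n: only the coordinates i < n are meaningful. *)
Definition vec : Type := nat -> Cx.
Definition mat : Type := nat -> nat -> Cx.

Definition vadd (x y : vec) : vec := fun i => Cadd (x i) (y i).
Definition vsub (x y : vec) : vec := fun i => Cadd (x i) (Copp (y i)).
Definition vscal (a : Cx) (x : vec) : vec := fun i => Cmul a (x i).
Definition vzero : vec := fun _ => C0.
Fixpoint vsum (N : nat) (f : nat -> vec) : vec :=
  match N with O => vzero | S N' => vadd (vsum N' f) (f N') end.

Fixpoint Rsumsq (N : nat) (x : vec) : R :=
  match N with O => 0 | S N' => Rsumsq N' x + Cmod (x N') ^ 2 end.
Definition vnorm (n : nat) (x : vec) : R := sqrt (Rsumsq n x).

Definition madd (A B : mat) : mat := fun i j => Cadd (A i j) (B i j).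
Definition mscal (a : Cx) (A : mat) : mat := fun i j => Cmul a (A i j).
Definition mapply (n : nat) (A : mat) (x : vec) : vec :=
  fun i => Csum n (fun k => Cmul (A i k) (x k)).
Definition mmul (n : nat) (A B : mat) : mat :=
  fun i j => Csum n (fun k => Cmul (A i k) (B k j)).
Definition mid : mat := fun i j => if Nat.eqb i j then RtoC 1 else C0.
Fixpoint mpow (n : nat) (A : mat) (k : nat) : mat :=
  match k with O => mid | S k' => mmul n A (mpow n A k') end.
Definition madj (A : mat) : mat := fun i j => Cconj (A j i).

Definition Vcv (n : nat) (s : nat -> vec) (l : vec) : Prop :=
  forall eps : R, eps > 0 ->
    exists N : nat, forall m : nat, (m >= N)%nat -> vnorm n (vsub (s m) l) < eps.

Definition mexp_apply (n : nat) (M : mat) (v w : vec) : Prop :=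
  Vcv n (fun N => vsum (S N)
           (fun j => vscal (RtoC (/ INR (fact j))) (mapply n (mpow n M j) v))) w.

Definition is_opnorm (n : nat) (A : mat) (s : R) : Prop :=
  is_lub (fun r => exists x : vec, vnorm n x <= 1 /\ r = vnorm n (mapply n A x)) s.

Definition is_eigenvalue (n : nat) (H : mat) (lam : Cx) : Prop :=
  exists x : vec, (exists i, (i < n)%nat /\ x i <> C0) /\
    forall i, (i < n)%nat -> mapply n H x i = Cmul lam (x i).

(* logarithmic norm  mu(B) = max Lambda((B + B^* )/2)  (the spectrum of the
   Hermitian part is real; m is the largest eigenvalue) *)
Definition is_lognorm (n : nat) (B : mat) (m : R) : Prop :=
  let H := mscal (RtoC (/ 2)) (madd B (madj B)) in
  is_eigenvalue n H (RtoC m) /\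
  forall lam : Cx, is_eigenvalue n H lam -> fst lam <= m.

(* Main.v *)
Require Import Defs.
From Stdlib Require Import Reals Arith ZArith Factorial Lra Lia Psatz FunctionalExtensionality ClassicalEpsilon Classical.
From Coquelicot Require Complex ElemFct.
Open Scope R_scope.


Fixpoint Rsum (N : nat) (f : nat -> R) : R :=
  match N with O => 0 | S N' => Rsum N' f + f N' end.

Lemma Rsum_ext (N : nat) (f g : nat -> R) :
  (forall i, (i < N)%nat -> f i = g i) -> Rsum N f = Rsum N g.
Proof.
  induction N; simpl; intros H; auto.
  rewrite IHN by (intros; apply H; lia). rewrite H by lia. reflexivity.
Qed.

Lemma Rsum_add (N : nat) (f g : nat -> R) :
  Rsum N (fun i => f i + g i) = Rsum N f + Rsum N g.
Proof. induction N; simpl; [lra|rewrite IHN; lra]. Qed.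

Lemma Rsum_opp (N : nat) (f : nat -> R) :
  Rsum N (fun i => - f i) = - Rsum N f.
Proof. induction N; simpl; [lra|rewrite IHN; lra]. Qed.

Lemma Rsum_scal (N : nat) (a : R) (f : nat -> R) :
  Rsum N (fun i => a * f i) = a * Rsum N f.
Proof. induction N; simpl; [lra|rewrite IHN; lra]. Qed.

Lemma Rsum_zero (N : nat) : Rsum N (fun _ => 0) = 0.
Proof. induction N; simpl; [lra|rewrite IHN; lra]. Qed.

Lemma Rsum_le (N : nat) (f g : nat -> R) :
  (forall i, (i < N)%nat -> f i <= g i) -> Rsum N f <= Rsum N g.
Proof.
  induction N; simpl; intros H; [lra|].
  assert (Rsum N f <= Rsum N g) by (apply IHN; intros; apply H; lia).
  specialize (H N ltac:(lia)). lra.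
Qed.

Lemma Rsum_nonneg (N : nat) (f : nat -> R) :
  (forall i, (i < N)%nat -> 0 <= f i) -> 0 <= Rsum N f.
Proof.
  intros H. rewrite <- (Rsum_zero N). apply Rsum_le. auto.
Qed.

Lemma Rsum_term_le (N : nat) (f : nat -> R) (i : nat) :
  (forall j, (j < N)%nat -> 0 <= f j) -> (i < N)%nat -> f i <= Rsum N f.
Proof.
  induction N; simpl; intros H Hi; [lia|].
  assert (0 <= Rsum N f) by (apply Rsum_nonneg; intros; apply H; lia).
  destruct (Nat.eq_dec i N) as [->|Hne].
  - lra.
  - assert (f i <= Rsum N f) by (apply IHN; [intros; apply H; lia | lia]).
    specialize (H N ltac:(lia)). lra.
Qed.

Lemma Rsum_swap (N M : nat) (f : nat -> nat -> R) :
  Rsum N (fun i => Rsum M (fun j => f i j)) = Rsum M (fun j => Rsum N (fun i => f i j)).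
Proof.
  induction N; simpl.
  - rewrite Rsum_zero. reflexivity.
  - rewrite IHN. rewrite <- Rsum_add. reflexivity.
Qed.

Lemma Rsum_split (a b : nat) (f : nat -> R) :
  Rsum (a + b) f = Rsum a f + Rsum b (fun j => f (a + j)%nat).
Proof.
  induction b; simpl.
  - rewrite Nat.add_0_r. lra.
  - rewrite Nat.add_succ_r. simpl. rewrite IHb. lra.
Qed.

Lemma Rsum_shift (N : nat) (f : nat -> R) :
  Rsum (S N) f = f O + Rsum N (fun j => f (S j)).
Proof.
  change (S N) with (1 + N)%nat. rewrite Rsum_split. simpl. lra.
Qed.

Lemma Csum_fst (N : nat) (f : nat -> Cx) : fst (Csum N f) = Rsum N (fun k => fst (f k)).
Proof. induction N; simpl; auto. rewrite IHN. reflexivity. Qed.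
Lemma Csum_snd (N : nat) (f : nat -> Cx) : snd (Csum N f) = Rsum N (fun k => snd (f k)).
Proof. induction N; simpl; auto. rewrite IHN. reflexivity. Qed.

Lemma Cx_ext (a b : Cx) : fst a = fst b -> snd a = snd b -> a = b.
Proof. destruct a, b; simpl; intros -> ->; reflexivity. Qed.

Lemma vsum_app (N : nat) (f : nat -> vec) (i : nat) :
  vsum N f i = Csum N (fun l => f l i).
Proof. induction N; simpl; auto. unfold vadd. rewrite IHN. reflexivity. Qed.

Definition rd (a b : Cx) : R := fst a * fst b + snd a * snd b.
Definition rip (n : nat) (x y : vec) : R := Rsum n (fun i => rd (x i) (y i)).

Lemma Rsumsq_rip (n : nat) (x : vec) : Rsumsq n x = rip n x x.
Proof.
  unfold rip. induction n; cbn [Rsumsq Rsum]; auto. rewrite IHn.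
  assert (E : Cmod (x n) ^ 2 = rd (x n) (x n)).
  { unfold Cmod, rd. rewrite pow2_sqrt; [ring|]. nra. }
  rewrite E. reflexivity.
Qed.

Lemma rip_xx_nonneg (n : nat) (x : vec) : 0 <= rip n x x.
Proof. unfold rip. apply Rsum_nonneg. intros. unfold rd. nra. Qed.

Lemma vnorm_sq (n : nat) (x : vec) : vnorm n x ^ 2 = rip n x x.
Proof. unfold vnorm. rewrite Rsumsq_rip, pow2_sqrt; auto using rip_xx_nonneg. Qed.

Lemma vnorm_nonneg (n : nat) (x : vec) : 0 <= vnorm n x.
Proof. unfold vnorm. apply sqrt_pos. Qed.

Lemma vnorm_rip (n : nat) (x : vec) : vnorm n x = sqrt (rip n x x).
Proof. unfold vnorm. rewrite Rsumsq_rip. reflexivity. Qed.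

Lemma rip_sym (n : nat) (x y : vec) : rip n x y = rip n y x.
Proof. unfold rip. apply Rsum_ext. intros. unfold rd. ring. Qed.

Lemma rip_ext (n : nat) (x x' y y' : vec) :
  (forall i, (i < n)%nat -> x i = x' i) -> (forall i, (i < n)%nat -> y i = y' i) ->
  rip n x y = rip n x' y'.
Proof. intros H1 H2. unfold rip. apply Rsum_ext. intros. rewrite H1, H2 by auto. reflexivity. Qed.

Lemma vnorm_ext (n : nat) (x y : vec) :
  (forall i, (i < n)%nat -> x i = y i) -> vnorm n x = vnorm n y.
Proof. intros H. rewrite !vnorm_rip. erewrite rip_ext; eauto. Qed.

Lemma rip_addl (n : nat) (x y z : vec) : rip n (vadd x y) z = rip n x z + rip n y z.
Proof. unfold rip. rewrite <- Rsum_add. apply Rsum_ext. intros. unfold rd, vadd, Cadd. simpl. ring. Qed.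

Lemma rip_subl (n : nat) (x y z : vec) : rip n (vsub x y) z = rip n x z - rip n y z.
Proof. unfold rip. unfold Rminus. rewrite <- Rsum_opp, <- Rsum_add. apply Rsum_ext. intros. unfold rd, vsub, Cadd, Copp. simpl. ring. Qed.

Lemma rip_scall (n : nat) (r : R) (x z : vec) : rip n (vscal (RtoC r) x) z = r * rip n x z.
Proof. unfold rip. rewrite <- Rsum_scal. apply Rsum_ext. intros. unfold rd, vscal, Cmul, RtoC. simpl. ring. Qed.

Lemma rip_addr (n : nat) (x y z : vec) : rip n z (vadd x y) = rip n z x + rip n z y.
Proof. rewrite !(rip_sym n z). apply rip_addl. Qed.
Lemma rip_subr (n : nat) (x y z : vec) : rip n z (vsub x y) = rip n z x - rip n z y.
Proof. rewrite !(rip_sym n z). apply rip_subl. Qed.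
Lemma rip_scalr (n : nat) (r : R) (x z : vec) : rip n z (vscal (RtoC r) x) = r * rip n z x.
Proof. rewrite !(rip_sym n z). apply rip_scall. Qed.

Lemma CS_sq (N : nat) (a b : nat -> R) :
  Rsum N (fun i => a i * b i) ^ 2 <= Rsum N (fun i => a i ^ 2) * Rsum N (fun i => b i ^ 2).
Proof.
  induction N; [simpl; lra|]. cbn [Rsum].
  set (s := Rsum N (fun i => a i * b i)) in *.
  set (A := Rsum N (fun i => a i ^ 2)) in *.
  set (B := Rsum N (fun i => b i ^ 2)) in *.
  assert (HA : 0 <= A) by (apply Rsum_nonneg; intros; nra).
  assert (HB : 0 <= B) by (apply Rsum_nonneg; intros; nra).
  set (x := a N) in *. set (y := b N) in *.
  assert (H2 : 2 * s * x * y <= A * y^2 + B * x^2).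
  { assert (Hq : (2 * s * x * y) ^ 2 <= (A * y ^ 2 + B * x ^ 2) ^ 2).
    { assert (0 <= (A * y^2 - B * x^2)^2) by apply pow2_ge_0.
      assert (s^2 * (x^2*y^2) <= A * B * (x^2*y^2)) by (apply Rmult_le_compat_r; nra).
      nra. }
    assert (0 <= A * y^2 + B * x^2) by nra.
    destruct (Rle_dec (2 * s * x * y) 0); [lra|].
    apply Rsqr_incr_0_var; [unfold Rsqr; lra | lra]. }
  nra.
Qed.

Lemma Rsum_double (n : nat) (f : nat -> R) :
  Rsum n (fun i => f (2*i)%nat + f (S (2*i))) = Rsum (2*n) f.
Proof.
  induction n as [|m IH]; [reflexivity|].
  replace (2 * S m)%nat with (S (S (2*m))) by lia. cbn [Rsum].
  rewrite IH. lra.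
Qed.

Lemma rip_CS (n : nat) (x y : vec) : Rabs (rip n x y) <= vnorm n x * vnorm n y.
Proof.
  assert (H : rip n x y ^ 2 <= rip n x x * rip n y y).
  { unfold rip, rd.
    pose (a := fun i => if Nat.even i then fst (x (Nat.div2 i)) else snd (x (Nat.div2 i))).
    assert (E : forall (f : nat -> R), Rsum n (fun i => f (2*i)%nat + f (S (2*i))) = Rsum (2*n) f)
      by (intros; apply Rsum_double).
    pose (fa := fun i => if Nat.even i then fst (x (Nat.div2 i)) else snd (x (Nat.div2 i))).
    pose (fb := fun i => if Nat.even i then fst (y (Nat.div2 i)) else snd (y (Nat.div2 i))).
    assert (Hev : forall i, Nat.even (2*i) = true) by (intros; rewrite Nat.even_mul; reflexivity).
    assert (Hod : forall i, Nat.even (S (2*i)) = false) by (intros; rewrite Nat.even_succ, Nat.odd_mul; reflexivity).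
    assert (Hd1 : forall i, Nat.div2 (2*i) = i) by (intros; apply Nat.div2_double).
    assert (Hd2 : forall i, Nat.div2 (S (2*i)) = i) by (intros; apply Nat.div2_succ_double).
    assert (E1 : Rsum n (fun i => fst (x i) * fst (y i) + snd (x i) * snd (y i)) = Rsum (2*n) (fun i => fa i * fb i)).
    { rewrite <- E. apply Rsum_ext. intros. unfold fa, fb. rewrite Hev, Hod, Hd1, Hd2. reflexivity. }
    assert (E2 : Rsum n (fun i => fst (x i) * fst (x i) + snd (x i) * snd (x i)) = Rsum (2*n) (fun i => fa i ^ 2)).
    { rewrite <- E. apply Rsum_ext. intros. unfold fa. rewrite Hev, Hod, Hd1, Hd2. ring. }
    assert (E3 : Rsum n (fun i => fst (y i) * fst (y i) + snd (y i) * snd (y i)) = Rsum (2*n) (fun i => fb i ^ 2)).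
    { rewrite <- E. apply Rsum_ext. intros. unfold fb. rewrite Hev, Hod, Hd1, Hd2. ring. }
    rewrite E1, E2, E3. apply CS_sq. }
  rewrite <- !vnorm_sq in H.
  pose proof (vnorm_nonneg n x). pose proof (vnorm_nonneg n y).
  rewrite <- (Rabs_pos_eq (vnorm n x * vnorm n y)) by nra.
  apply Rsqr_le_abs_0. unfold Rsqr. nra.
Qed.


Ltac cxsimpl := unfold vadd, vsub, vscal, vzero, Cadd, Cmul, Copp, C0, RtoC, Cconj in *; simpl.
Ltac vext := apply functional_extensionality; intro; apply Cx_ext; cxsimpl; ring.

Lemma sq_le (a b : R) : 0 <= b -> a ^ 2 <= b ^ 2 -> a <= b.
Proof. intros Hb H. destruct (Rle_dec a 0); [lra|]. apply Rsqr_incr_0_var; unfold Rsqr; lra. Qed.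

Lemma Cmod_sq (a : Cx) : Cmod a ^ 2 = fst a ^ 2 + snd a ^ 2.
Proof. unfold Cmod. rewrite pow2_sqrt; [ring|]. nra. Qed.

Lemma Cmod_nonneg (a : Cx) : 0 <= Cmod a.
Proof. unfold Cmod. apply sqrt_pos. Qed.

Lemma Cmod_mul (a b : Cx) : Cmod (Cmul a b) = Cmod a * Cmod b.
Proof.
  apply Rle_antisym; apply sq_le;
    try (apply Rmult_le_pos; apply Cmod_nonneg); try apply Cmod_nonneg;
    rewrite ?Rpow_mult_distr, !Cmod_sq; destruct a, b; unfold Cmul; simpl; nra.
Qed.

Lemma Cmod_RtoC (r : R) : Cmod (RtoC r) = Rabs r.
Proof.
  unfold Cmod, RtoC. simpl. rewrite <- sqrt_Rsqr_abs. f_equal. unfold Rsqr. ring.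
Qed.

Lemma Cmod_Cpow (e : Cx) (l : nat) : Cmod (Cpow e l) = Cmod e ^ l.
Proof.
  induction l; simpl.
  - rewrite Cmod_RtoC. apply Rabs_R1.
  - rewrite Cmod_mul, IHl. reflexivity.
Qed.

Lemma rip_vscal (n : nat) (a : Cx) (x : vec) :
  rip n (vscal a x) (vscal a x) = Cmod a ^ 2 * rip n x x.
Proof.
  unfold rip. rewrite <- Rsum_scal. apply Rsum_ext. intros.
  rewrite Cmod_sq. unfold rd, vscal, Cmul. simpl. ring.
Qed.

Lemma vnorm_scal (n : nat) (a : Cx) (x : vec) : vnorm n (vscal a x) = Cmod a * vnorm n x.
Proof.
  apply Rle_antisym; apply sq_le;
    try (apply Rmult_le_pos; [apply Cmod_nonneg|apply vnorm_nonneg]); try apply vnorm_nonneg;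
    rewrite ?Rpow_mult_distr, !vnorm_sq, rip_vscal; lra.
Qed.

Lemma vnorm_triangle (n : nat) (x y : vec) : vnorm n (vadd x y) <= vnorm n x + vnorm n y.
Proof.
  pose proof (vnorm_nonneg n x). pose proof (vnorm_nonneg n y).
  apply sq_le; [lra|]. rewrite vnorm_sq, rip_addl, !rip_addr.
  pose proof (rip_CS n x y). pose proof (Rle_abs (rip n x y)).
  rewrite (rip_sym n y x). rewrite <- (vnorm_sq n x), <- (vnorm_sq n y). nra.
Qed.

Lemma vnorm_sub_le (n : nat) (x y : vec) : vnorm n (vsub x y) <= vnorm n x + vnorm n y.
Proof.
  pose proof (vnorm_nonneg n x). pose proof (vnorm_nonneg n y).
  apply sq_le; [lra|]. rewrite vnorm_sq, rip_subl, !rip_subr.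
  pose proof (rip_CS n x y). pose proof (Rle_abs (- rip n x y)). rewrite Rabs_Ropp in *.
  rewrite (rip_sym n y x). rewrite <- (vnorm_sq n x), <- (vnorm_sq n y). nra.
Qed.

Lemma vsub_split (x y z : vec) : vsub x z = vadd (vsub x y) (vsub y z).
Proof. vext. Qed.

Lemma vnorm_sub_tri (n : nat) (x y z : vec) :
  vnorm n (vsub x z) <= vnorm n (vsub x y) + vnorm n (vsub y z).
Proof. rewrite (vsub_split x y z). apply vnorm_triangle. Qed.

Lemma vnorm_sub_sym (n : nat) (x y : vec) : vnorm n (vsub x y) = vnorm n (vsub y x).
Proof.
  rewrite !vnorm_rip. f_equal. unfold rip. apply Rsum_ext. intros. cxsimpl. unfold rd. simpl. ring.
Qed.

Lemma vnorm_zero (n : nat) : vnorm n vzero = 0.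
Proof.
  rewrite vnorm_rip. unfold rip. rewrite Rsum_ext with (g := fun _ => 0).
  - rewrite Rsum_zero. apply sqrt_0.
  - intros. unfold rd, vzero, C0. simpl. ring.
Qed.

Lemma vnorm_vsum (n N : nat) (f : nat -> vec) :
  vnorm n (vsum N f) <= Rsum N (fun l => vnorm n (f l)).
Proof.
  induction N; simpl.
  - rewrite vnorm_zero. lra.
  - eapply Rle_trans; [apply vnorm_triangle|]. lra.
Qed.

Lemma coord_le (n : nat) (x : vec) (i : nat) : (i < n)%nat -> Cmod (x i) <= vnorm n x.
Proof.
  intros Hi. apply sq_le; [apply vnorm_nonneg|]. rewrite vnorm_sq, Cmod_sq.
  unfold rip. eapply Rle_trans; [|apply (Rsum_term_le n _ i)]; auto.
  - unfold rd. nra.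
  - intros. unfold rd. nra.
Qed.

Lemma vnorm_eq0 (n : nat) (x : vec) : vnorm n x = 0 -> forall i, (i < n)%nat -> x i = C0.
Proof.
  intros H i Hi. pose proof (coord_le n x i Hi). rewrite H in H0.
  pose proof (Cmod_nonneg (x i)).
  assert (Cmod (x i) ^ 2 = 0) by (replace (Cmod (x i)) with 0 by lra; ring).
  rewrite Cmod_sq in H2. apply Cx_ext; unfold C0; simpl; nra.
Qed.

Lemma vnorm_le_Rsum (n : nat) (x : vec) : vnorm n x <= Rsum n (fun i => Cmod (x i)).
Proof.
  apply sq_le. { apply Rsum_nonneg. intros. apply Cmod_nonneg. }
  rewrite vnorm_sq. unfold rip. induction n.
  - simpl. lra.
  - cbn [Rsum]. assert (Rsum n (fun i => rd (x i) (x i)) <= Rsum n (fun i => Cmod (x i)) ^ 2) by auto.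
    assert (0 <= Rsum n (fun i => Cmod (x i))) by (apply Rsum_nonneg; intros; apply Cmod_nonneg).
    assert (rd (x n) (x n) = Cmod (x n) ^2) by (rewrite Cmod_sq; unfold rd; ring).
    pose proof (Cmod_nonneg (x n)). nra.
Qed.


Lemma Rsum_lin (N : nat) (a b : R) (f g : nat -> R) :
  a * Rsum N f + b * Rsum N g = Rsum N (fun k => a * f k + b * g k).
Proof. rewrite <- !Rsum_scal, <- Rsum_add. reflexivity. Qed.

Lemma Rsum_linr (N : nat) (a b : R) (f g : nat -> R) :
  Rsum N f * a + Rsum N g * b = Rsum N (fun k => f k * a + g k * b).
Proof. rewrite (Rmult_comm _ a), (Rmult_comm _ b), Rsum_lin. apply Rsum_ext; intros; ring. Qed.

Lemma mapply_fst (n : nat) (A : mat) (x : vec) (i : nat) :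
  fst (mapply n A x i) = Rsum n (fun k => fst (A i k) * fst (x k) - snd (A i k) * snd (x k)).
Proof. unfold mapply. rewrite Csum_fst. reflexivity. Qed.
Lemma mapply_snd (n : nat) (A : mat) (x : vec) (i : nat) :
  snd (mapply n A x i) = Rsum n (fun k => fst (A i k) * snd (x k) + snd (A i k) * fst (x k)).
Proof. unfold mapply. rewrite Csum_snd. reflexivity. Qed.

Ltac mapp := apply functional_extensionality; intro; apply Cx_ext;
  cxsimpl; rewrite ?mapply_fst, ?mapply_snd; unfold mapply; rewrite ?Csum_fst, ?Csum_snd.

Lemma mapply_vadd (n : nat) (A : mat) (x y : vec) :
  mapply n A (vadd x y) = vadd (mapply n A x) (mapply n A y).
Proof.
  mapp; rewrite <- Rsum_add; apply Rsum_ext; intros; cxsimpl; ring.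
Qed.

Lemma mapply_vsub (n : nat) (A : mat) (x y : vec) :
  mapply n A (vsub x y) = vsub (mapply n A x) (mapply n A y).
Proof.
  mapp; unfold Rminus; rewrite <- Rsum_opp, <- Rsum_add; apply Rsum_ext; intros; cxsimpl; ring.
Qed.

Lemma mapply_vscal (n : nat) (A : mat) (a : Cx) (x : vec) :
  mapply n A (vscal a x) = vscal a (mapply n A x).
Proof.
  mapp; unfold Rminus; rewrite ?Ropp_mult_distr_l, ?Rsum_lin; apply Rsum_ext; intros; cxsimpl; ring.
Qed.

Lemma mapply_vzero (n : nat) (A : mat) : mapply n A vzero = vzero.
Proof.
  mapp; rewrite Rsum_ext with (g := fun _ => 0); try apply Rsum_zero; intros; cxsimpl; ring.
Qed.

Lemma mapply_madd (n : nat) (A B : mat) (x : vec) :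
  mapply n (madd A B) x = vadd (mapply n A x) (mapply n B x).
Proof.
  mapp; rewrite <- Rsum_add; apply Rsum_ext; intros; unfold madd; cxsimpl; ring.
Qed.

Lemma mapply_mscal (n : nat) (a : Cx) (A : mat) (x : vec) :
  mapply n (mscal a A) x = vscal a (mapply n A x).
Proof.
  mapp; unfold Rminus; rewrite ?Ropp_mult_distr_l, ?Rsum_lin; apply Rsum_ext; intros; unfold mscal; cxsimpl; ring.
Qed.

Lemma mapply_ext (n : nat) (A : mat) (x y : vec) :
  (forall i, (i < n)%nat -> x i = y i) -> mapply n A x = mapply n A y.
Proof.
  intros H. unfold mapply. apply functional_extensionality; intro i.
  induction n; simpl; auto. rewrite IHn by (intros; apply H; lia). rewrite H by lia. reflexivity.
Qed.

Lemma mapply_mid (n : nat) (x : vec) (i : nat) : (i < n)%nat -> mapply n mid x i = x i.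
Proof.
  intros Hi. apply Cx_ext; rewrite ?mapply_fst, ?mapply_snd.
  - replace (fst (x i)) with (Rsum n (fun k => if Nat.eqb i k then fst (x k) else 0)).
    + apply Rsum_ext. intros. unfold mid. destruct (Nat.eqb i i0); unfold RtoC, C0; simpl; ring.
    + clear -Hi. induction n; [lia|]. cbn [Rsum].
      destruct (Nat.eq_dec i n) as [->|Hne].
      * rewrite Nat.eqb_refl. rewrite Rsum_ext with (g := fun _ => 0); [rewrite Rsum_zero; ring|].
        intros. destruct (Nat.eqb_spec n i); [lia|auto].
      * rewrite IHn by lia. destruct (Nat.eqb_spec i n); [lia|ring].
  - replace (snd (x i)) with (Rsum n (fun k => if Nat.eqb i k then snd (x k) else 0)).
    + apply Rsum_ext. intros. unfold mid. destruct (Nat.eqb i i0); unfold RtoC, C0; simpl; ring.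
    + clear -Hi. induction n; [lia|]. cbn [Rsum].
      destruct (Nat.eq_dec i n) as [->|Hne].
      * rewrite Nat.eqb_refl. rewrite Rsum_ext with (g := fun _ => 0); [rewrite Rsum_zero; ring|].
        intros. destruct (Nat.eqb_spec n i); [lia|auto].
      * rewrite IHn by lia. destruct (Nat.eqb_spec i n); [lia|ring].
Qed.

Lemma mapply_mmul (n : nat) (A B : mat) (x : vec) :
  mapply n (mmul n A B) x = mapply n A (mapply n B x).
Proof.
  apply functional_extensionality; intro i; apply Cx_ext; rewrite ?mapply_fst, ?mapply_snd.
  - unfold mmul.
    transitivity (Rsum n (fun k => Rsum n (fun j =>
       (fst (A i j) * fst (B j k) - snd (A i j) * snd (B j k)) * fst (x k)
       - (fst (A i j) * snd (B j k) + snd (A i j) * fst (B j k)) * snd (x k)))).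
    + apply Rsum_ext; intros. rewrite Csum_fst, Csum_snd. unfold Rminus.
      rewrite Ropp_mult_distr_r, Rsum_linr.
      apply Rsum_ext; intros; simpl; ring.
    + rewrite Rsum_swap. apply Rsum_ext; intros. rewrite mapply_fst, mapply_snd.
      unfold Rminus. rewrite Ropp_mult_distr_l, Rsum_lin. apply Rsum_ext; intros; ring.
  - unfold mmul.
    transitivity (Rsum n (fun k => Rsum n (fun j =>
       (fst (A i j) * fst (B j k) - snd (A i j) * snd (B j k)) * snd (x k)
       + (fst (A i j) * snd (B j k) + snd (A i j) * fst (B j k)) * fst (x k)))).
    + apply Rsum_ext; intros. rewrite Csum_fst, Csum_snd. rewrite Rsum_linr.
      apply Rsum_ext; intros; simpl; ring.
    + rewrite Rsum_swap. apply Rsum_ext; intros. rewrite mapply_fst, mapply_snd.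
      rewrite Rsum_lin. apply Rsum_ext; intros; ring.
Qed.

Lemma rip_adj (n : nat) (A : mat) (x y : vec) :
  rip n (mapply n A y) x = rip n y (mapply n (madj A) x).
Proof.
  unfold rip, rd.
  transitivity (Rsum n (fun i => Rsum n (fun k =>
     (fst (A i k) * fst (y k) - snd (A i k) * snd (y k)) * fst (x i)
     + (fst (A i k) * snd (y k) + snd (A i k) * fst (y k)) * snd (x i)))).
  - apply Rsum_ext; intros. rewrite mapply_fst, mapply_snd, Rsum_linr. reflexivity.
  - rewrite Rsum_swap. apply Rsum_ext; intros. rewrite mapply_fst, mapply_snd, Rsum_lin.
    apply Rsum_ext; intros. unfold madj, Cconj. simpl. ring.
Qed.


Lemma Cmod_tri (a b : Cx) : Cmod (Cadd a b) <= Cmod a + Cmod b.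
Proof. exact (Complex.Cmod_triangle a b). Qed.

Lemma Cmod_Csum (N : nat) (f : nat -> Cx) : Cmod (Csum N f) <= Rsum N (fun k => Cmod (f k)).
Proof.
  induction N; simpl.
  - unfold Cmod, C0. simpl. replace (0*(0*1)+0*(0*1)) with 0 by ring. rewrite sqrt_0. lra.
  - eapply Rle_trans; [apply Cmod_tri|]. lra.
Qed.

Definition Kmat (n : nat) (A : mat) : R :=
  sqrt (Rsum n (fun i => (Rsum n (fun k => Cmod (A i k))) ^ 2)).

Lemma Kmat_nonneg (n : nat) (A : mat) : 0 <= Kmat n A.
Proof. apply sqrt_pos. Qed.

Lemma mapply_bound (n : nat) (A : mat) (x : vec) :
  vnorm n (mapply n A x) <= Kmat n A * vnorm n x.
Proof.
  pose proof (vnorm_nonneg n x).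
  assert (Hi : forall i, Cmod (mapply n A x i) <= Rsum n (fun k => Cmod (A i k)) * vnorm n x).
  { intros i. unfold mapply. eapply Rle_trans; [apply Cmod_Csum|].
    rewrite Rmult_comm, <- Rsum_scal. apply Rsum_le. intros k Hk.
    rewrite Cmod_mul. pose proof (coord_le n x k Hk). pose proof (Cmod_nonneg (A i k)). nra. }
  apply sq_le. { apply Rmult_le_pos; auto using Kmat_nonneg. }
  rewrite vnorm_sq, Rpow_mult_distr. unfold Kmat. rewrite pow2_sqrt.
  2:{ apply Rsum_nonneg. intros. apply pow2_ge_0. }
  rewrite Rmult_comm, <- Rsum_scal. unfold rip. apply Rsum_le. intros i Hin.
  assert (rd (mapply n A x i) (mapply n A x i) = Cmod (mapply n A x i) ^ 2)
    by (rewrite Cmod_sq; unfold rd; ring).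
  rewrite H0. specialize (Hi i). pose proof (Cmod_nonneg (mapply n A x i)).
  assert (0 <= Rsum n (fun k => Cmod (A i k))) by (apply Rsum_nonneg; intros; apply Cmod_nonneg).
  nra.
Qed.

Lemma opnorm_nonneg (n : nat) (A : mat) (a : R) : is_opnorm n A a -> 0 <= a.
Proof.
  intros [Hub _]. apply Hub. exists vzero. split.
  - rewrite vnorm_zero. lra.
  - rewrite mapply_vzero, vnorm_zero. reflexivity.
Qed.

Lemma opnorm_bound (n : nat) (A : mat) (a : R) (x : vec) :
  is_opnorm n A a -> vnorm n (mapply n A x) <= a * vnorm n x.
Proof.
  intros Hop. pose proof (opnorm_nonneg _ _ _ Hop) as Ha.
  pose proof (vnorm_nonneg n x) as Hx.
  destruct (Req_dec (vnorm n x) 0) as [H0|H0].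
  - assert (E : mapply n A x = mapply n A vzero).
    { apply mapply_ext. intros. rewrite (vnorm_eq0 n x H0 i H). reflexivity. }
    rewrite E, mapply_vzero, vnorm_zero. nra.
  - set (y := vscal (RtoC (/ vnorm n x)) x).
    assert (Hy : vnorm n y = 1).
    { unfold y. rewrite vnorm_scal, Cmod_RtoC, Rabs_pos_eq.
      - field. auto.
      - apply Rlt_le, Rinv_0_lt_compat. lra. }
    assert (Hb : vnorm n (mapply n A y) <= a).
    { destruct Hop as [Hub _]. apply Hub. exists y. split; auto. lra. }
    unfold y in Hb. rewrite mapply_vscal, vnorm_scal, Cmod_RtoC, Rabs_pos_eq in Hb.
    2:{ apply Rlt_le, Rinv_0_lt_compat. lra. }
    apply (Rmult_le_compat_r (vnorm n x)) in Hb; auto.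
    rewrite Rmult_comm, <- Rmult_assoc, Rinv_r, Rmult_1_l in Hb; auto.
Qed.


Definition incr (phi : nat -> nat) : Prop := forall j, (phi j < phi (S j))%nat.

Lemma incr_ge (phi : nat -> nat) : incr phi -> forall j, (j <= phi j)%nat.
Proof. intros H j. induction j; [lia|]. specialize (H j). lia. Qed.

Lemma incr_comp (phi psi : nat -> nat) : incr phi -> incr psi -> incr (fun j => phi (psi j)).
Proof.
  intros H1 H2 j. specialize (H2 j).
  assert (forall a b, (a < b)%nat -> (phi a < phi b)%nat).
  { intros a b Hab. induction b; [lia|].
    destruct (Nat.eq_dec a b) as [->|]; [apply H1|]. specialize (H1 b). assert (phi a < phi b)%nat by (apply IHb; lia). lia. }
  apply H; auto.
Qed.

Lemma Un_cv_sub (u : nat -> R) (l : R) (psi : nat -> nat) :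
  incr psi -> Un_cv u l -> Un_cv (fun j => u (psi j)) l.
Proof.
  intros Hp Hu eps Heps. destruct (Hu eps Heps) as [N HN]. exists N. intros j Hj.
  apply HN. pose proof (incr_ge psi Hp j). lia.
Qed.

Lemma subseq_R (a : nat -> R) (B : R) :
  (forall j, Rabs (a j) <= B) -> exists psi l, incr psi /\ Un_cv (fun j => a (psi j)) l.
Proof.
  intros Hb.
  destruct (Bolzano_Weierstrass a (fun c => -B <= c <= B) (compact_P3 (-B) B)) as [l Hl].
  { intros j. specialize (Hb j). revert Hb. unfold Rabs. destruct Rcase_abs; intros; lra. }
  assert (Hex : forall N j : nat, exists p, (N <= p)%nat /\ Rabs (a p - l) < / (INR j + 1)).
  { intros N j.
    assert (Hpos : 0 < / (INR j + 1)) by (apply Rinv_0_lt_compat; pose proof (pos_INR j); lra).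
    destruct (Hl (disc l (mkposreal _ Hpos)) N) as [p [Hp1 Hp2]].
    - exists (mkposreal _ Hpos). intros y Hy. exact Hy.
    - exists p. split; auto. }
  set (sel := fun N j => proj1_sig (constructive_indefinite_description _ (Hex N j))).
  assert (Hsel : forall N j, (N <= sel N j)%nat /\ Rabs (a (sel N j) - l) < / (INR j + 1)).
  { intros. unfold sel. destruct (constructive_indefinite_description _ _). auto. }
  set (psi := fix psi (j : nat) : nat := match j with O => sel O O | S j' => sel (S (psi j')) (S j') end).
  exists psi, l. split.
  - intros j. simpl. destruct (Hsel (S (psi j)) (S j)). lia.
  - intros eps Heps.
    destruct (archimed (/ eps)) as [Ha _].
    assert (Hz : (0 <= up (/ eps))%Z).
    { apply le_IZR. assert (0 < / eps) by (apply Rinv_0_lt_compat; lra). lra. }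
    exists (Z.to_nat (up (/ eps))). intros j Hj. unfold Rdist.
    assert (Hj2 : Rabs (a (psi j) - l) < / (INR j + 1)).
    { destruct j; simpl; apply Hsel. }
    eapply Rlt_le_trans; [exact Hj2|].
    assert (INR j >= / eps).
    { apply Rle_ge. apply le_INR in Hj. rewrite INR_IZR_INZ, Z2Nat.id in Hj by auto. lra. }
    assert (0 < INR j + 1) by (pose proof (pos_INR j); lra).
    apply (Rmult_le_reg_l (INR j + 1)); auto. rewrite Rinv_r by lra.
    assert (0 < / eps) by (apply Rinv_0_lt_compat; lra).
    apply (Rmult_le_reg_l (/ eps)); auto.
    replace (/ eps * ((INR j + 1) * eps)) with (INR j + 1) by (field; lra). lra.
Qed.

Lemma subseq_vec (n : nat) (x : nat -> vec) (B : R) :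
  (forall j i, (i < n)%nat -> Rabs (fst (x j i)) <= B /\ Rabs (snd (x j i)) <= B) ->
  forall k, (k <= n)%nat -> exists phi (L : vec), incr phi /\
    forall i, (i < k)%nat -> Un_cv (fun j => fst (x (phi j) i)) (fst (L i)) /\
                             Un_cv (fun j => snd (x (phi j) i)) (snd (L i)).
Proof.
  intros Hb k. induction k; intros Hk.
  - exists (fun j => j), (fun _ => C0). split; [intros j; lia|]. intros; lia.
  - destruct IHk as [phi [L [Hphi HL]]]; [lia|].
    destruct (subseq_R (fun j => fst (x (phi j) k)) B) as [psi1 [l1 [Hp1 Hc1]]].
    { intros j. apply Hb. lia. }
    destruct (subseq_R (fun j => snd (x (phi (psi1 j)) k)) B) as [psi2 [l2 [Hp2 Hc2]]].
    { intros j. apply Hb. lia. }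
    exists (fun j => phi (psi1 (psi2 j))), (fun i => if Nat.eqb i k then (l1, l2) else L i).
    split.
    + apply incr_comp; auto. apply incr_comp; auto.
    + intros i Hi. destruct (Nat.eqb_spec i k) as [->|Hne].
      * simpl. split.
        -- apply (Un_cv_sub (fun j => fst (x (phi (psi1 j)) k))); auto.
        -- exact Hc2.
      * destruct (HL i ltac:(lia)) as [H1 H2]. split.
        -- apply (Un_cv_sub (fun j => fst (x (phi j) i))); auto. apply incr_comp; auto.
        -- apply (Un_cv_sub (fun j => snd (x (phi j) i))); auto. apply incr_comp; auto.
Qed.

Lemma Rsum_cv (N : nat) (u : nat -> nat -> R) (l : nat -> R) :
  (forall i, (i < N)%nat -> Un_cv (fun j => u j i) (l i)) ->
  Un_cv (fun j => Rsum N (u j)) (Rsum N l).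
Proof.
  induction N; intros H; simpl.
  - intros eps Heps. exists O. intros. unfold Rdist. rewrite Rminus_diag, Rabs_R0. lra.
  - apply CV_plus; auto.
Qed.

Lemma Un_cv_sqrt0 (u : nat -> R) : (forall j, 0 <= u j) -> Un_cv u 0 -> Un_cv (fun j => sqrt (u j)) 0.
Proof.
  intros Hp Hu eps Heps. destruct (Hu (eps * eps)) as [N HN]; [nra|]. exists N. intros j Hj.
  specialize (HN j Hj). unfold Rdist in *. rewrite Rminus_0_r in *. rewrite Rabs_pos_eq in HN by auto.
  rewrite Rabs_pos_eq by apply sqrt_pos. rewrite <- (sqrt_square eps) by lra.
  apply sqrt_lt_1; auto. nra.
Qed.

Lemma vec_cv (n : nat) (y : nat -> vec) (L : vec) :
  (forall i, (i < n)%nat -> Un_cv (fun j => fst (y j i)) (fst (L i)) /\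
                           Un_cv (fun j => snd (y j i)) (snd (L i))) ->
  Un_cv (fun j => vnorm n (vsub (y j) L)) 0.
Proof.
  intros H.
  apply (Un_cv_ext (fun j => sqrt (rip n (vsub (y j) L) (vsub (y j) L)))).
  { intros; symmetry; apply vnorm_rip. }
  apply Un_cv_sqrt0; [intros; apply rip_xx_nonneg|].
  replace 0 with (Rsum n (fun _ => 0)) by apply Rsum_zero.
  unfold rip. apply Rsum_cv. intros i Hi. destruct (H i Hi) as [H1 H2].
  unfold rd, vsub, Cadd, Copp. simpl.
  assert (Hf : Un_cv (fun j => fst (y j i) + - fst (L i)) 0).
  { replace 0 with (fst (L i) + - fst (L i)) by ring. apply CV_plus; auto.
    intros eps Heps; exists O; intros; unfold Rdist; rewrite Rminus_diag, Rabs_R0; lra. }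
  assert (Hs : Un_cv (fun j => snd (y j i) + - snd (L i)) 0).
  { replace 0 with (snd (L i) + - snd (L i)) by ring. apply CV_plus; auto.
    intros eps Heps; exists O; intros; unfold Rdist; rewrite Rminus_diag, Rabs_R0; lra. }
  replace 0 with (0 * 0 + 0 * 0) by ring. apply CV_plus; apply CV_mult; auto.
Qed.


Section Spec.
Variable n : nat.
Variable A0 : mat.
Let f (x : vec) := rip n (mapply n A0 x) x.
Local Notation K := (Kmat n A0).

Lemma f_lip (a b : vec) :
  Rabs (f a - f b) <= K * vnorm n (vsub a b) * (vnorm n a + vnorm n b).
Proof.
  unfold f.
  replace (rip n (mapply n A0 a) a - rip n (mapply n A0 b) b)
    with (rip n (mapply n A0 (vsub a b)) a + rip n (mapply n A0 b) (vsub a b)).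
  2:{ rewrite mapply_vsub, rip_subl, rip_subr. ring. }
  eapply Rle_trans; [apply Rabs_triang|].
  pose proof (rip_CS n (mapply n A0 (vsub a b)) a).
  pose proof (rip_CS n (mapply n A0 b) (vsub a b)).
  pose proof (mapply_bound n A0 (vsub a b)). pose proof (mapply_bound n A0 b).
  pose proof (vnorm_nonneg n a). pose proof (vnorm_nonneg n b). pose proof (vnorm_nonneg n (vsub a b)).
  pose proof (Kmat_nonneg n A0).
  assert (vnorm n (mapply n A0 (vsub a b)) * vnorm n a <= K * vnorm n (vsub a b) * vnorm n a)
    by (apply Rmult_le_compat_r; auto).
  assert (vnorm n (mapply n A0 b) * vnorm n (vsub a b) <= K * vnorm n b * vnorm n (vsub a b))
    by (apply Rmult_le_compat_r; auto).
  nra.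
Qed.

Lemma rip_lip (a b : vec) :
  Rabs (rip n a a - rip n b b) <= vnorm n (vsub a b) * (vnorm n a + vnorm n b).
Proof.
  replace (rip n a a - rip n b b) with (rip n (vsub a b) a + rip n b (vsub a b))
    by (rewrite rip_subl, rip_subr, (rip_sym n b a); ring).
  eapply Rle_trans; [apply Rabs_triang|].
  pose proof (rip_CS n (vsub a b) a). pose proof (rip_CS n b (vsub a b)). nra.
Qed.

Lemma f_bound (x : vec) : f x <= K * vnorm n x ^ 2.
Proof.
  unfold f. pose proof (rip_CS n (mapply n A0 x) x). pose proof (Rle_abs (rip n (mapply n A0 x) x)).
  pose proof (mapply_bound n A0 x). pose proof (vnorm_nonneg n x).
  assert (vnorm n (mapply n A0 x) * vnorm n x <= K * vnorm n x * vnorm n x)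
    by (apply Rmult_le_compat_r; auto). nra.
Qed.

Lemma f_scal (r : R) (x : vec) : f (vscal (RtoC r) x) = r * r * f x.
Proof. unfold f. rewrite mapply_vscal, rip_scall, rip_scalr. ring. Qed.

Lemma cv_of_bound (u d : nat -> R) (l C : R) :
  (forall j, Rabs (u j - l) <= C * d j) -> Un_cv d 0 -> Un_cv u l.
Proof.
  intros H Hd eps Heps.
  destruct (Hd (eps / (Rabs C + 1))) as [N HN].
  { apply Rdiv_lt_0_compat; auto. pose proof (Rabs_pos C). lra. }
  exists N. intros j Hj. specialize (HN j Hj). unfold Rdist in *. rewrite Rminus_0_r in HN.
  eapply Rle_lt_trans; [apply H|].
  pose proof (Rabs_pos C). pose proof (Rle_abs C). pose proof (Rle_abs (d j)).
  assert (Rabs (d j) * (Rabs C + 1) < eps).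
  { apply (Rmult_lt_compat_r (Rabs C + 1)) in HN; [|lra].
    unfold Rdiv in HN. rewrite Rmult_assoc, Rinv_l, Rmult_1_r in HN by lra. exact HN. }
  assert (C * d j <= Rabs C * Rabs (d j)) by (rewrite <- Rabs_mult; apply Rle_abs).
  pose proof (Rabs_pos (d j)). nra.
Qed.

Lemma real_quad (L Q : R) : (forall s, s * L + s * s * Q <= 0) -> L = 0.
Proof.
  intros H. pose proof (H (L / (Rabs Q + 1))) as H1.
  pose proof (Rabs_pos Q). pose proof (Rle_abs Q). pose proof (Rle_abs (-Q)). rewrite Rabs_Ropp in *.
  set (s := L / (Rabs Q + 1)) in *.
  assert (Hs : s * (Rabs Q + 1) = L) by (unfold s; field; lra).
  clearbody s.
  assert (0 <= s * s * (1 + Rabs Q + Q)).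
  { apply Rmult_le_pos; [nra|lra]. }
  assert (s * L + s * s * Q = s * s * (Rabs Q + 1 + Q)) by (rewrite <- Hs; ring).
  assert (s * s * (1 + Rabs Q + Q) <= 0) by (replace (1 + Rabs Q + Q) with (Rabs Q + 1 + Q) by ring; lra).
  assert (s * s * (1 + Rabs Q + Q) = 0) by lra.
  assert (s = 0).
  { apply Rmult_integral in H7. destruct H7 as [H7|H7]; [apply Rmult_integral in H7; tauto|lra]. }
  rewrite <- Hs, H8. ring.
Qed.

Lemma lognorm_bound (m : R) : is_lognorm n A0 m -> forall x, f x <= m * rip n x x.
Proof.
  intros [Heig Hmx].
  set (H := mscal (RtoC (/ 2)) (madd A0 (madj A0))) in *.
  destruct Heig as [x0 [[i0 [Hi0 Hx0]] _]].
  assert (Hnx0 : vnorm n x0 <> 0).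
  { intros Hc. apply Hx0. apply (vnorm_eq0 n x0 Hc i0 Hi0). }
  pose proof (vnorm_nonneg n x0).
  set (y0 := vscal (RtoC (/ vnorm n x0)) x0).
  assert (Hy0 : vnorm n y0 = 1).
  { unfold y0. rewrite vnorm_scal, Cmod_RtoC, Rabs_pos_eq; [field; auto|].
    apply Rlt_le, Rinv_0_lt_compat. lra. }
  set (S := fun r => exists x, vnorm n x = 1 /\ r = f x).
  assert (Hbnd : bound S).
  { exists K. intros r [x [Hx ->]]. pose proof (f_bound x). rewrite Hx in H1. lra. }
  destruct (completeness S Hbnd (ex_intro _ (f y0) (ex_intro _ y0 (conj Hy0 eq_refl)))) as [M [HMub HMl]].
  assert (Hle1 : forall x, vnorm n x = 1 -> f x <= M).
  { intros x Hx. apply HMub. exists x. auto. }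
  assert (Hmaxz : forall z, f z <= M * rip n z z).
  { intros z. destruct (Req_dec (vnorm n z) 0) as [Hz|Hz].
    - assert (E : forall i, (i < n)%nat -> z i = vzero i) by (intros i Hi; rewrite (vnorm_eq0 n z Hz i Hi); reflexivity).
      unfold f. rewrite (mapply_ext n A0 z vzero E), mapply_vzero.
      rewrite (rip_ext n vzero vzero z vzero) by auto.
      rewrite (rip_ext n z vzero z vzero) by auto.
      unfold rip, rd, vzero, C0. simpl. rewrite Rsum_ext with (g := fun _ => 0) by (intros; ring).
      rewrite Rsum_zero. lra.
    - pose proof (vnorm_nonneg n z).
      set (y := vscal (RtoC (/ vnorm n z)) z).
      assert (Hy : vnorm n y = 1).
      { unfold y. rewrite vnorm_scal, Cmod_RtoC, Rabs_pos_eq; [field; auto|].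
        apply Rlt_le, Rinv_0_lt_compat. lra. }
      pose proof (Hle1 y Hy) as Hfy. unfold y in Hfy. rewrite f_scal in Hfy.
      rewrite <- vnorm_sq.
      assert (0 < / vnorm n z * / vnorm n z) by (apply Rmult_lt_0_compat; apply Rinv_0_lt_compat; lra).
      apply (Rmult_le_reg_l (/ vnorm n z * / vnorm n z)); auto.
      replace (/ vnorm n z * / vnorm n z * (M * vnorm n z ^ 2)) with M by (field; auto). exact Hfy. }
  assert (Hseq : forall j : nat, exists x, vnorm n x = 1 /\ M - / (INR j + 1) < f x).
  { intros j. apply NNPP. intros Hn.
    assert (Hpos : 0 < / (INR j + 1)) by (apply Rinv_0_lt_compat; pose proof (pos_INR j); lra).
    assert (M <= M - / (INR j + 1)); [|lra].
    apply HMl. intros r [x [Hx ->]]. destruct (Rlt_le_dec (M - / (INR j + 1)) (f x)); auto.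
    exfalso. apply Hn. exists x. auto. }
  set (xs := fun j => proj1_sig (constructive_indefinite_description _ (Hseq j))).
  assert (Hxs : forall j, vnorm n (xs j) = 1 /\ M - / (INR j + 1) < f (xs j)).
  { intros. unfold xs. destruct (constructive_indefinite_description _ _). auto. }
  destruct (subseq_vec n xs 1) with (k := n) as [phi [L [Hphi HL]]]; [|lia|].
  { intros j i Hi. destruct (Hxs j) as [Hn1 _]. pose proof (coord_le n (xs j) i Hi) as Hc.
    rewrite Hn1 in Hc. pose proof (Cmod_sq (xs j i)) as Hs. pose proof (Cmod_nonneg (xs j i)) as Hp.
    assert (Hq : fst (xs j i) ^ 2 + snd (xs j i) ^ 2 <= 1) by nra.
    split; apply Rabs_le; split; nra. }
  pose proof (vec_cv n (fun j => xs (phi j)) L HL) as Hd.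
  assert (HfL : f L = M).
  { symmetry. apply (UL_sequence (fun j => f (xs (phi j)))).
    - apply (cv_of_bound _ (fun j => / (INR j + 1)) M 1).
      + intros j. destruct (Hxs (phi j)) as [Hn1 Hf]. pose proof (Hle1 _ Hn1) as Hfm.
        pose proof (incr_ge phi Hphi j) as Hge. apply le_INR in Hge.
        assert (/ (INR (phi j) + 1) <= / (INR j + 1)).
        { apply Rinv_le_contravar; pose proof (pos_INR j); lra. }
        rewrite Rabs_left1; lra.
      + intros eps Heps. destruct (archimed (/ eps)) as [Ha _].
        assert (Hz : (0 <= up (/ eps))%Z).
        { apply le_IZR. assert (0 < / eps) by (apply Rinv_0_lt_compat; lra). lra. }
        exists (Z.to_nat (up (/ eps))). intros j Hj. unfold Rdist. rewrite Rminus_0_r.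
        assert (0 < INR j + 1) by (pose proof (pos_INR j); lra).
        rewrite Rabs_pos_eq by (apply Rlt_le, Rinv_0_lt_compat; lra).
        assert (INR j >= / eps).
        { apply Rle_ge. apply le_INR in Hj. rewrite INR_IZR_INZ, Z2Nat.id in Hj by auto. lra. }
        apply (Rmult_lt_reg_l (INR j + 1)); auto. rewrite Rinv_r by lra.
        assert (0 < / eps) by (apply Rinv_0_lt_compat; lra).
        apply (Rmult_lt_reg_l (/ eps)); auto.
        replace (/ eps * ((INR j + 1) * eps)) with (INR j + 1) by (field; lra). lra.
    - apply (cv_of_bound _ (fun j => vnorm n (vsub (xs (phi j)) L)) (f L) (K * (1 + vnorm n L))); auto.
      intros j. eapply Rle_trans; [apply f_lip|]. destruct (Hxs (phi j)) as [Hn1 _]. rewrite Hn1.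
      pose proof (vnorm_nonneg n (vsub (xs (phi j)) L)). pose proof (Kmat_nonneg n A0).
      right. ring. }
  assert (HLL : rip n L L = 1).
  { apply (UL_sequence (fun j => rip n (xs (phi j)) (xs (phi j)))).
    - apply (cv_of_bound _ (fun j => vnorm n (vsub (xs (phi j)) L)) (rip n L L) (1 + vnorm n L)); auto.
      intros j. eapply Rle_trans; [apply rip_lip|]. destruct (Hxs (phi j)) as [Hn1 _]. rewrite Hn1.
      right. ring.
    - intros eps Heps. exists O. intros j _. unfold Rdist. destruct (Hxs (phi j)) as [Hn1 _].
      rewrite <- vnorm_sq, Hn1. replace (1 ^ 2 - 1) with 0 by ring. rewrite Rabs_R0. lra. }
  (* first-order condition *)
  assert (Hfo : forall y, rip n (mapply n A0 L) y + rip n (mapply n A0 y) L - 2 * M * rip n L y = 0).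
  { intros y. apply (real_quad _ (f y - M * rip n y y)). intros s.
    pose proof (Hmaxz (vadd L (vscal (RtoC s) y))) as Hz.
    unfold f in Hz, HfL. rewrite mapply_vadd, mapply_vscal, !rip_addl, !rip_addr, !rip_scall, !rip_scalr in Hz.
    rewrite (rip_sym n y L) in Hz. rewrite HfL, HLL in Hz. unfold f. lra. }
  set (w := vsub (mapply n H L) (vscal (RtoC M) L)).
  assert (Hw : forall y, rip n w y = 0).
  { intros y. unfold w, H. rewrite rip_subl, mapply_mscal, mapply_madd, rip_scall, rip_addl, rip_scall.
    rewrite (rip_sym n (mapply n (madj A0) L) y), <- rip_adj.
    pose proof (Hfo y) as Hy. clear -Hy. lra. }
  assert (Hw0 : vnorm n w = 0).
  { rewrite vnorm_rip, Hw. apply sqrt_0. }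
  assert (Heig : is_eigenvalue n H (RtoC M)).
  { exists L. split.
    - apply NNPP. intros Hc.
      assert (E : forall i, (i < n)%nat -> L i = vzero i).
      { intros i Hi. apply NNPP. intros Hne. apply Hc. exists i. split; auto. }
      rewrite (rip_ext n L vzero L vzero) in HLL by auto.
      unfold rip, rd, vzero, C0 in HLL. simpl in HLL.
      rewrite Rsum_ext with (g := fun _ => 0) in HLL by (intros; ring). rewrite Rsum_zero in HLL. lra.
    - intros i Hi. pose proof (vnorm_eq0 n w Hw0 i Hi) as Hwi. unfold w, vsub, vscal in Hwi.
      revert Hwi. generalize (mapply n H L i). intros a Ha.
      destruct a as [a1 a2]. destruct (L i) as [l1 l2].
      unfold Cadd, Copp, Cmul, RtoC, C0 in *; simpl in *. injection Ha; intros.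
      apply Cx_ext; simpl; lra. }
  pose proof (Hmx _ Heig) as HMm. simpl in HMm.
  intros x. pose proof (Hmaxz x). pose proof (rip_xx_nonneg n x).
  assert (M * rip n x x <= m * rip n x x) by (apply Rmult_le_compat_r; auto). lra.
Qed.

End Spec.


Fixpoint binomR (m j : nat) : R :=
  match m, j with
  | _, O => 1
  | O, S _ => 0
  | S m', S j' => binomR m' j' + binomR m' (S j')
  end.

Fixpoint ff (x : R) (j : nat) : R :=
  match j with O => 1 | S j' => ff x j' * (x - INR j') end.

Lemma binomR_0 (m : nat) : binomR m 0 = 1.
Proof. destruct m; reflexivity. Qed.

Lemma binomR_nonneg (m j : nat) : 0 <= binomR m j.
Proof.
  revert j. induction m; intros j; destruct j; simpl; try lra.
  pose proof (IHm j). pose proof (IHm (S j)). lra.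
Qed.

Lemma binomR_zero (m j : nat) : (m < j)%nat -> binomR m j = 0.
Proof.
  revert j. induction m; intros j Hj; destruct j; simpl; try lia; try lra.
  rewrite !IHm by lia. lra.
Qed.

Lemma ff_zero (m j : nat) : (m < j)%nat -> ff (INR m) j = 0.
Proof.
  induction j; intros Hj; [lia|]. simpl.
  destruct (Nat.eq_dec m j) as [->|Hne].
  - rewrite Rminus_diag. ring.
  - rewrite IHj by lia. ring.
Qed.

Lemma ff_succ (x : R) (j : nat) : ff (x + 1) (S j) = (x + 1) * ff x j.
Proof.
  induction j.
  - simpl. ring.
  - change (ff (x + 1) (S (S j))) with (ff (x + 1) (S j) * (x + 1 - INR (S j))).
    rewrite IHj. simpl ff. rewrite S_INR. ring.
Qed.

Lemma binom_ff (m j : nat) : binomR m j * INR (fact j) = ff (INR m) j.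
Proof.
  revert j. induction m; intros j.
  - destruct j; [simpl; lra|]. rewrite (ff_zero 0 (S j)) by lia. simpl. ring.
  - destruct j.
    + simpl. lra.
    + rewrite S_INR, ff_succ. simpl binomR.
      replace ((binomR m j + binomR m (S j)) * INR (fact (S j)))
        with (INR (S j) * (binomR m j * INR (fact j)) + binomR m (S j) * INR (fact (S j)))
        by (rewrite fact_simpl, mult_INR; ring).
      rewrite !IHm. simpl ff. rewrite S_INR. ring.
Qed.

Lemma ff_nonneg (m j : nat) : 0 <= ff (INR m) j.
Proof.
  induction j; simpl; [lra|].
  destruct (le_lt_dec j m).
  - apply Rmult_le_pos; auto. apply le_INR in l. lra.
  - rewrite ff_zero by lia. lra.
Qed.

Lemma ff_le (m j : nat) : ff (INR m) j <= INR m ^ j.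
Proof.
  induction j; simpl; [lra|].
  destruct (le_lt_dec j m).
  - pose proof (ff_nonneg m j). pose proof (pos_INR j). apply le_INR in l.
    assert (INR m - INR j <= INR m) by lra.
    assert (0 <= INR m - INR j) by lra.
    rewrite Rmult_comm. apply Rmult_le_compat; auto.
  - rewrite ff_zero by lia. pose proof (pos_INR m). rewrite Rmult_0_l. apply Rmult_le_pos; auto.
    apply pow_le; auto.
Qed.

Lemma ff_ge (m j : nat) : (1 <= m)%nat ->
  (2 * INR m - INR j ^ 2) * INR m ^ j <= 2 * INR m * ff (INR m) j.
Proof.
  intros Hm. induction j.
  - simpl. lra.
  - simpl ff. rewrite S_INR.
    destruct (le_lt_dec j m).
    + apply le_INR in l. pose proof (pos_INR j). pose proof (pos_INR m).
      assert (0 <= INR m - INR j) by lra.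
      assert (H2 : (2 * INR m - INR j ^ 2) * INR m ^ j * (INR m - INR j) <= 2 * INR m * ff (INR m) j * (INR m - INR j))
        by (apply Rmult_le_compat_r; auto).
      assert (Hp : 0 <= INR m ^ j) by (apply pow_le; auto).
      assert ((2 * INR m - (INR j + 1) ^ 2) * INR m ^ S j <= (2 * INR m - INR j ^ 2) * INR m ^ j * (INR m - INR j)).
      { simpl. assert (0 <= (INR j ^ 3 + INR m) * INR m ^ j) by (apply Rmult_le_pos; [|auto]; pose proof (pow_le (INR j) 3 H); lra).
        nra. }
      nra.
    + rewrite ff_zero by lia. apply lt_INR in l. apply le_INR in Hm. simpl in Hm.
      pose proof (pos_INR m). pose proof (pow_le (INR m) j H).
      assert (2 * INR m - (INR j + 1) ^ 2 <= 0) by nra.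
      simpl. assert (0 <= INR m * INR m ^ j) by (apply Rmult_le_pos; auto). nra.
Qed.

Lemma coef_err (m j : nat) : (1 <= m)%nat ->
  0 <= / INR (fact j) - binomR m j / INR m ^ j <= INR j ^ 2 / (2 * INR m) * / INR (fact j).
Proof.
  intros Hm.
  assert (Hmpos : 0 < INR m) by (apply lt_0_INR; lia).
  assert (Hmj : 0 < INR m ^ j) by (apply pow_lt; auto).
  assert (Hf : 0 < INR (fact j)) by (apply lt_0_INR, lt_O_fact).
  pose proof (binom_ff m j). pose proof (ff_le m j). pose proof (ff_ge m j Hm).
  assert (Eb : binomR m j = ff (INR m) j / INR (fact j)) by (rewrite <- H; field; lra).
  rewrite Eb. split.
  - assert (E : / INR (fact j) - ff (INR m) j / INR (fact j) / INR m ^ j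
              = (INR m ^ j - ff (INR m) j) / (INR m ^ j * INR (fact j))) by (field; lra).
    rewrite E. unfold Rdiv. apply Rmult_le_pos; [lra|]. apply Rlt_le, Rinv_0_lt_compat, Rmult_lt_0_compat; auto.
  - assert (E : / INR (fact j) - ff (INR m) j / INR (fact j) / INR m ^ j
              = (INR m ^ j - ff (INR m) j) / (INR m ^ j * INR (fact j))) by (field; lra).
    rewrite E.
    assert (E2 : INR j ^ 2 / (2 * INR m) * / INR (fact j) = (INR j ^ 2 * INR m ^ j) / (2 * INR m * INR m ^ j * INR (fact j)))
      by (field; lra).
    rewrite E2.
    replace (INR j ^ 2 * INR m ^ j / (2 * INR m * INR m ^ j * INR (fact j)))
      with ((INR j ^ 2 * INR m ^ j / (2 * INR m)) / (INR m ^ j * INR (fact j))) by (field; lra).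
    unfold Rdiv at 1 3. apply Rmult_le_compat_r.
    { apply Rlt_le, Rinv_0_lt_compat, Rmult_lt_0_compat; auto. }
    apply (Rmult_le_reg_l (2 * INR m)); [lra|].
    replace (2 * INR m * (INR j ^ 2 * INR m ^ j * / (2 * INR m))) with (INR j ^ 2 * INR m ^ j) by (field; lra).
    lra.
Qed.

Lemma binom_h (m l : nat) (t : R) : (1 <= m)%nat -> 0 <= t ->
  binomR m l * (t / INR m) ^ l <= t ^ l / INR (fact l).
Proof.
  intros Hm Ht.
  assert (Hmpos : 0 < INR m) by (apply lt_0_INR; lia).
  assert (Hf : 0 < INR (fact l)) by (apply lt_0_INR, lt_O_fact).
  pose proof (binom_ff m l). pose proof (ff_le m l).
  assert (Eb : binomR m l = ff (INR m) l / INR (fact l)) by (rewrite <- H; field; lra).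
  rewrite Eb. unfold Rdiv. rewrite Rpow_mult_distr, pow_inv.
  assert (0 <= t ^ l) by (apply pow_le; auto).
  assert (0 < INR m ^ l) by (apply pow_lt; auto).
  unfold Rdiv. apply (Rmult_le_reg_r (INR (fact l) * INR m ^ l)); [nra|].
  replace (ff (INR m) l * / INR (fact l) * (t ^ l * / INR m ^ l) * (INR (fact l) * INR m ^ l))
    with (ff (INR m) l * t ^ l) by (field; lra).
  replace (t ^ l * / INR (fact l) * (INR (fact l) * INR m ^ l)) with (INR m ^ l * t ^ l) by (field; lra).
  apply Rmult_le_compat_r; auto.
Qed.


Lemma vadd_comm (x y : vec) : vadd x y = vadd y x.
Proof. vext. Qed.
Lemma vadd_assoc (x y z : vec) : vadd (vadd x y) z = vadd x (vadd y z).
Proof. vext. Qed.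
Lemma vadd_zero_r (x : vec) : vadd x vzero = x.
Proof. vext. Qed.
Lemma vadd_zero_l (x : vec) : vadd vzero x = x.
Proof. vext. Qed.
Lemma vscal_vscal (a b : Cx) (x : vec) : vscal a (vscal b x) = vscal (Cmul a b) x.
Proof. apply functional_extensionality; intro; apply Cx_ext; cxsimpl; ring. Qed.
Lemma vscal_vadd (a : Cx) (x y : vec) : vscal a (vadd x y) = vadd (vscal a x) (vscal a y).
Proof. vext. Qed.
Lemma vscal_zero (a : Cx) : vscal a vzero = vzero.
Proof. vext. Qed.
Lemma vscal_comm (a b : Cx) (x : vec) : vscal a (vscal b x) = vscal b (vscal a x).
Proof. vext. Qed.
Lemma vscal_one (x : vec) : vscal (RtoC 1) x = x.
Proof. vext. Qed.

Lemma vsum_ext (L : nat) (f g : nat -> vec) :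
  (forall l, (l < L)%nat -> f l = g l) -> vsum L f = vsum L g.
Proof.
  induction L; simpl; intros H; auto. rewrite IHL by (intros; apply H; lia). rewrite H by lia. auto.
Qed.

Lemma vsum_add (L : nat) (f g : nat -> vec) :
  vsum L (fun l => vadd (f l) (g l)) = vadd (vsum L f) (vsum L g).
Proof.
  induction L; simpl. { vext. } rewrite IHL. vext.
Qed.

Lemma vsum_shift (L : nat) (f : nat -> vec) :
  vsum (S L) f = vadd (f O) (vsum L (fun l => f (S l))).
Proof.
  induction L.
  - simpl. vext.
  - change (vsum (S (S L)) f) with (vadd (vsum (S L) f) (f (S L))). rewrite IHL. simpl. vext.
Qed.

Lemma vsum_zero (L : nat) : vsum L (fun _ => vzero) = vzero.
Proof. induction L; simpl; auto. rewrite IHL. vext. Qed.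

Lemma vsum_scal (L : nat) (a : Cx) (f : nat -> vec) :
  vscal a (vsum L f) = vsum L (fun l => vscal a (f l)).
Proof. induction L; simpl. { vext. } rewrite <- IHL. vext. Qed.

Lemma vsum_mapply (n L : nat) (A : mat) (f : nat -> vec) :
  mapply n A (vsum L f) = vsum L (fun l => mapply n A (f l)).
Proof. induction L; simpl. { apply mapply_vzero. } rewrite mapply_vadd, IHL. reflexivity. Qed.

Section Euler.
Variable n : nat.
Variables A0 A1 : mat.
Variable h : R.
Variable u0 : vec.

Definition Gop (x : vec) : vec := vadd x (vscal (RtoC h) (mapply n A0 x)).
Definition Fop (x : vec) : vec := vscal (RtoC h) (mapply n A1 x).

Fixpoint dd (j l : nat) : vec :=
  match j with
  | O => match l with O => u0 | S _ => vzero end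
  | S j' => match l with
            | O => Gop (dd j' O)
            | S l' => vadd (Gop (dd j' (S l'))) (Fop (dd j' l'))
            end
  end.

Lemma Gop_zero : Gop vzero = vzero.
Proof. unfold Gop. rewrite mapply_vzero. vext. Qed.
Lemma Fop_zero : Fop vzero = vzero.
Proof. unfold Fop. rewrite mapply_vzero. vext. Qed.
Lemma Gop_add (x y : vec) : Gop (vadd x y) = vadd (Gop x) (Gop y).
Proof. unfold Gop. rewrite mapply_vadd. vext. Qed.
Lemma Fop_add (x y : vec) : Fop (vadd x y) = vadd (Fop x) (Fop y).
Proof. unfold Fop. rewrite mapply_vadd. vext. Qed.
Lemma Gop_scal (a : Cx) (x : vec) : Gop (vscal a x) = vscal a (Gop x).
Proof. unfold Gop. rewrite mapply_vscal. vext. Qed.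
Lemma Fop_scal (a : Cx) (x : vec) : Fop (vscal a x) = vscal a (Fop x).
Proof. unfold Fop. rewrite mapply_vscal. vext. Qed.

Lemma dd_zero (j l : nat) : (j < l)%nat -> dd j l = vzero.
Proof.
  revert l. induction j; intros l Hl; destruct l; try lia; simpl; auto.
  all: repeat rewrite IHj by lia; rewrite Gop_zero, Fop_zero; apply vadd_zero_r.
Qed.

Definition Sop (e : Cx) (x : vec) : vec := vadd (Gop x) (vscal e (Fop x)).

Lemma Sop_vsum (e : Cx) (L : nat) (f : nat -> vec) :
  Sop e (vsum L f) = vsum L (fun l => Sop e (f l)).
Proof.
  induction L; simpl.
  - unfold Sop. rewrite Gop_zero, Fop_zero. vext.
  - rewrite <- IHL. unfold Sop. rewrite Gop_add, Fop_add. vext.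
Qed.

Lemma step_sum (e : Cx) (j L : nat) :
  vsum (S L) (fun l => vscal (Cpow e l) (dd (S j) l)) =
  vadd (vsum (S L) (fun l => vscal (Cpow e l) (Gop (dd j l))))
       (vsum L (fun l => vscal (Cpow e (S l)) (Fop (dd j l)))).
Proof.
  induction L.
  - simpl. vext.
  - change (vsum (S (S L)) (fun l => vscal (Cpow e l) (dd (S j) l)))
      with (vadd (vsum (S L) (fun l => vscal (Cpow e l) (dd (S j) l))) (vscal (Cpow e (S L)) (dd (S j) (S L)))).
    rewrite IHL. cbn [dd].
    change (vsum (S (S L)) (fun l => vscal (Cpow e l) (Gop (dd j l))))
      with (vadd (vsum (S L) (fun l => vscal (Cpow e l) (Gop (dd j l)))) (vscal (Cpow e (S L)) (Gop (dd j (S L))))).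
    change (vsum (S L) (fun l => vscal (Cpow e (S l)) (Fop (dd j l))))
      with (vadd (vsum L (fun l => vscal (Cpow e (S l)) (Fop (dd j l)))) (vscal (Cpow e (S L)) (Fop (dd j L)))).
    generalize (vsum (S L) (fun l => vscal (Cpow e l) (Gop (dd j l)))) as X.
    generalize (vsum L (fun l => vscal (Cpow e (S l)) (Fop (dd j l)))) as Y.
    generalize (Gop (dd j (S L))) as Z. generalize (Fop (dd j L)) as W.
    generalize (Cpow e (S L)) as c. intros. vext.
Qed.

Lemma dd_expand (e : Cx) (j L : nat) : (j < L)%nat ->
  Nat.iter j (Sop e) u0 = vsum L (fun l => vscal (Cpow e l) (dd j l)).
Proof.
  revert L. induction j; intros L HL.
  - destruct L; [lia|]. rewrite vsum_shift. simpl.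
    rewrite vsum_ext with (g := fun _ => vzero) by (intros; apply vscal_zero).
    rewrite vsum_zero. vext.
  - destruct L as [|L]; [lia|]. simpl Nat.iter. rewrite (IHj L) by lia.
    rewrite Sop_vsum. rewrite step_sum.
    rewrite vsum_ext with (g := fun l => vadd (vscal (Cpow e l) (Gop (dd j l)))
                                              (vscal (Cpow e (S l)) (Fop (dd j l)))).
    2:{ intros. unfold Sop. rewrite Gop_scal, Fop_scal, vscal_vscal. reflexivity. }
    rewrite vsum_add. f_equal.
    change (vsum (S L) (fun l => vscal (Cpow e l) (Gop (dd j l))))
      with (vadd (vsum L (fun l => vscal (Cpow e l) (Gop (dd j l)))) (vscal (Cpow e L) (Gop (dd j L)))).
    rewrite (dd_zero j L) by lia. rewrite Gop_zero, vscal_zero, vadd_zero_r. reflexivity.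
Qed.

Lemma dd_bound (q a : R) (j l : nat) :
  0 < q -> 0 <= h -> 0 <= a ->
  (forall x, vnorm n (Gop x) <= q * vnorm n x) ->
  (forall x, vnorm n (mapply n A1 x) <= a * vnorm n x) ->
  vnorm n (dd j l) <= binomR j l * q ^ j * (h * a / q) ^ l * vnorm n u0.
Proof.
  intros Hq Hh Ha HG HA. pose proof (vnorm_nonneg n u0).
  assert (HF : forall x, vnorm n (Fop x) <= h * a * vnorm n x).
  { intros x. unfold Fop. rewrite vnorm_scal, Cmod_RtoC, Rabs_pos_eq by auto.
    rewrite Rmult_assoc. apply Rmult_le_compat_l; auto. }
  revert l. induction j; intros l.
  - destruct l; simpl.
    + lra.
    + rewrite vnorm_zero. lra.
  - destruct l.
    + simpl dd. eapply Rle_trans; [apply HG|]. specialize (IHj O). rewrite binomR_0 in *.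
      simpl pow in *. apply (Rmult_le_compat_l q) in IHj; lra.
    + cbn [dd]. eapply Rle_trans; [apply vnorm_triangle|].
      pose proof (HG (dd j (S l))). pose proof (HF (dd j l)).
      pose proof (IHj (S l)). pose proof (IHj l).
      set (r := h * a / q) in *.
      assert (Hr : h * a = q * r) by (unfold r; field; lra).
      assert (0 <= h * a) by (apply Rmult_le_pos; auto).
      assert (q * vnorm n (dd j (S l)) <= q * (binomR j (S l) * q ^ j * r ^ S l * vnorm n u0))
        by (apply Rmult_le_compat_l; lra).
      assert (h * a * vnorm n (dd j l) <= h * a * (binomR j l * q ^ j * r ^ l * vnorm n u0))
        by (apply Rmult_le_compat_l; lra).
      simpl binomR. rewrite Hr in *. simpl pow in *. clearbody r. nra.
Qed.

End Euler.


Section EulerLim.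
Variable n : nat.
Variable M : mat.
Variable u0 : vec.
Let T (x : vec) := mapply n M x.
Let P (p : nat) := Nat.iter p T u0.

Definition Stp (c : R) (x : vec) : vec := vadd x (vscal (RtoC c) (mapply n M x)).

Lemma bstep_sum (c : R) (j L : nat) :
  vsum (S L) (fun p => vscal (RtoC (binomR (S j) p * c ^ p)) (P p)) =
  vadd (vsum (S L) (fun p => vscal (RtoC (binomR j p * c ^ p)) (P p)))
       (vsum L (fun p => vscal (RtoC (c * (binomR j p * c ^ p))) (P (S p)))).
Proof.
  induction L.
  - simpl. rewrite !binomR_0. vext.
  - change (vsum (S (S L)) (fun p => vscal (RtoC (binomR (S j) p * c ^ p)) (P p)))
      with (vadd (vsum (S L) (fun p => vscal (RtoC (binomR (S j) p * c ^ p)) (P p)))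
                 (vscal (RtoC (binomR (S j) (S L) * c ^ (S L))) (P (S L)))).
    rewrite IHL.
    change (vsum (S (S L)) (fun p => vscal (RtoC (binomR j p * c ^ p)) (P p)))
      with (vadd (vsum (S L) (fun p => vscal (RtoC (binomR j p * c ^ p)) (P p)))
                 (vscal (RtoC (binomR j (S L) * c ^ (S L))) (P (S L)))).
    change (vsum (S L) (fun p => vscal (RtoC (c * (binomR j p * c ^ p))) (P (S p))))
      with (vadd (vsum L (fun p => vscal (RtoC (c * (binomR j p * c ^ p))) (P (S p))))
                 (vscal (RtoC (c * (binomR j L * c ^ L))) (P (S L)))).
    simpl binomR.
    generalize (vsum (S L) (fun p => vscal (RtoC (binomR j p * c ^ p)) (P p))) as X.
    generalize (vsum L (fun p => vscal (RtoC (c * (binomR j p * c ^ p))) (P (S p)))) as Y.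
    generalize (P (S L)) as Z. intros. vext.
Qed.

Lemma binom_expand (c : R) (j L : nat) : (j < L)%nat ->
  Nat.iter j (Stp c) u0 = vsum L (fun p => vscal (RtoC (binomR j p * c ^ p)) (P p)).
Proof.
  revert L. induction j; intros L HL.
  - destruct L; [lia|]. rewrite vsum_shift.
    rewrite vsum_ext with (g := fun _ => vzero).
    2:{ intros. simpl binomR. rewrite Rmult_0_l. vext. }
    rewrite vsum_zero. simpl. unfold P. simpl. vext.
  - destruct L as [|L]; [lia|]. simpl Nat.iter. rewrite (IHj L) by lia.
    rewrite bstep_sum. unfold Stp at 1. f_equal.
    + change (vsum (S L) (fun p => vscal (RtoC (binomR j p * c ^ p)) (P p)))
        with (vadd (vsum L (fun p => vscal (RtoC (binomR j p * c ^ p)) (P p)))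
                   (vscal (RtoC (binomR j L * c ^ L)) (P L))).
      rewrite (binomR_zero j L) by lia. rewrite Rmult_0_l. 
      replace (vscal (RtoC 0) (P L)) with vzero by vext. rewrite vadd_zero_r. reflexivity.
    + rewrite mapply_vscal ||idtac. rewrite vsum_mapply, vsum_scal. apply vsum_ext. intros p Hp.
      rewrite mapply_vscal, vscal_vscal. f_equal.
      apply Cx_ext; cxsimpl; ring.
Qed.

Lemma mpow_iter (j : nat) : forall i, (i < n)%nat -> mapply n (mpow n M j) u0 i = P j i.
Proof.
  induction j; intros i Hi.
  - simpl. apply mapply_mid; auto.
  - simpl mpow. rewrite mapply_mmul. unfold P. simpl. unfold T.
    rewrite (mapply_ext n M _ (Nat.iter j T u0)); auto.
Qed.

Lemma P_bound (p : nat) : vnorm n (P p) <= Kmat n M ^ p * vnorm n u0.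
Proof.
  induction p; unfold P in *; simpl.
  - lra.
  - eapply Rle_trans; [apply mapply_bound|]. rewrite Rmult_assoc.
    apply Rmult_le_compat_l; auto using Kmat_nonneg.
Qed.

End EulerLim.

Lemma sq_le_4pow (j : nat) : INR j ^ 2 <= 4 ^ j.
Proof.
  induction j.
  - simpl. lra.
  - rewrite S_INR. simpl pow in *. destruct j.
    + simpl. lra.
    + rewrite S_INR in *. pose proof (pos_INR j). nra.
Qed.

Lemma Rsum_sum_f (N : nat) (f : nat -> R) : Rsum (S N) f = sum_f_R0 f N.
Proof. induction N; simpl; [lra|]. simpl in IHN. rewrite <- IHN. reflexivity. Qed.

Lemma Rsum_exp (N : nat) (x : R) : 0 <= x ->
  Rsum (S N) (fun j => x ^ j / INR (fact j)) <= exp x.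
Proof. intros Hx. rewrite Rsum_sum_f. apply ElemFct.exp_ge_taylor; auto. Qed.

Lemma vsub_vsum (L : nat) (f g : nat -> vec) :
  vsub (vsum L f) (vsum L g) = vsum L (fun j => vsub (f j) (g j)).
Proof. induction L; simpl. { vext. } rewrite <- IHL. vext. Qed.

Lemma euler_err (n : nat) (M : mat) (u0 : vec) (m N : nat) : (1 <= m)%nat -> (m <= N)%nat ->
  vnorm n (vsub (vsum (S N) (fun j => vscal (RtoC (/ INR (fact j))) (mapply n (mpow n M j) u0)))
                (Nat.iter m (Stp n M (/ INR m)) u0))
  <= exp (4 * Kmat n M) / (2 * INR m) * vnorm n u0.
Proof.
  intros Hm HN.
  set (P := fun p => Nat.iter p (fun x => mapply n M x) u0).
  rewrite (binom_expand n M u0 (/ INR m) m (S N)) by lia.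
  assert (Hmpos : 0 < INR m) by (apply lt_0_INR; lia).
  set (K := Kmat n M). pose proof (Kmat_nonneg n M). fold K in H.
  pose proof (vnorm_nonneg n u0).
  rewrite (vnorm_ext n _ (vsum (S N) (fun j => vscal (RtoC (/ INR (fact j) - binomR m j * (/ INR m) ^ j)) (P j)))).
  2:{ intros i Hi. rewrite vsub_vsum, !vsum_app. unfold P.
      induction (S N); simpl; auto. rewrite IHn0. f_equal.
      unfold vsub, vscal. rewrite mpow_iter by auto. apply Cx_ext; cxsimpl; ring. }
  eapply Rle_trans; [apply vnorm_vsum|].
  eapply Rle_trans with (Rsum (S N) (fun j => / (2 * INR m) * ((4 * K) ^ j / INR (fact j)) * vnorm n u0)).
  - apply Rsum_le. intros j Hj. rewrite vnorm_scal, Cmod_RtoC.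
    pose proof (coef_err m j Hm) as [Hc1 Hc2].
    replace (binomR m j * (/ INR m) ^ j) with (binomR m j / INR m ^ j) by (rewrite pow_inv; field; apply pow_nonzero; lra).
    rewrite Rabs_pos_eq by auto.
    pose proof (P_bound n M u0 j). fold K in H1. unfold P.
    assert (Hf : 0 < INR (fact j)) by (apply lt_0_INR, lt_O_fact).
    pose proof (sq_le_4pow j).
    assert (HKj : 0 <= K ^ j) by (apply pow_le; auto).
    eapply Rle_trans. { apply Rmult_le_compat_l; [auto|]. exact H1. }
    eapply Rle_trans. { apply Rmult_le_compat_r; [apply Rmult_le_pos; auto|]. exact Hc2. }
    rewrite Rpow_mult_distr.
    replace (INR j ^ 2 / (2 * INR m) * / INR (fact j) * (K ^ j * vnorm n u0))
      with (/ (2 * INR m) * / INR (fact j) * vnorm n u0 * (INR j ^ 2 * K ^ j)) by (field; lra).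
    replace (/ (2 * INR m) * (4 ^ j * K ^ j / INR (fact j)) * vnorm n u0)
      with (/ (2 * INR m) * / INR (fact j) * vnorm n u0 * (4 ^ j * K ^ j)) by (field; lra).
    apply Rmult_le_compat_l.
    + apply Rmult_le_pos; auto. apply Rmult_le_pos; apply Rlt_le, Rinv_0_lt_compat; lra.
    + apply Rmult_le_compat_r; auto.
  - rewrite Rsum_ext with (g := fun j => / (2 * INR m) * vnorm n u0 * ((4 * K) ^ j / INR (fact j)))
      by (intros; ring).
    rewrite Rsum_scal.
    replace (exp (4 * K) / (2 * INR m) * vnorm n u0) with (/ (2 * INR m) * vnorm n u0 * exp (4 * K)) by (field; lra).
    apply Rmult_le_compat_l.
    + apply Rmult_le_pos; auto. apply Rlt_le, Rinv_0_lt_compat; lra.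
    + apply Rsum_exp. lra.
Qed.


Lemma exp_pow_INR (x : R) (m : nat) : exp x ^ m = exp (INR m * x).
Proof.
  induction m.
  - simpl. rewrite Rmult_0_l, exp_0. reflexivity.
  - simpl pow. rewrite IHm, <- exp_plus, S_INR. f_equal. ring.
Qed.

Lemma exp_small (y : R) : 0 <= y <= 1/2 -> exp y <= 1 + 2 * y.
Proof.
  intros Hy. pose proof (exp_ineq1_le (- y)). rewrite exp_Ropp in H.
  pose proof (exp_pos y).
  assert (0 < 1 - y) by lra.
  assert (exp y * (1 - y) <= 1).
  { apply (Rmult_le_compat_l (exp y)) in H; [|lra]. rewrite Rinv_r in H by lra.
    replace (exp y * (1 + - y)) with (exp y * (1 - y)) in H by ring. exact H. }
  assert ((1 + 2 * y) * (1 - y) >= 1) by nra.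
  nra.
Qed.

Lemma arch_inv (C eta : R) : 0 < eta ->
  exists m0, (1 <= m0)%nat /\ forall m, (m0 <= m)%nat -> C / INR m <= eta.
Proof.
  intros He. destruct (archimed (Rabs C / eta)) as [Ha _].
  assert (Hz : (0 <= up (Rabs C / eta))%Z).
  { apply le_IZR. assert (0 <= Rabs C / eta) by (apply Rmult_le_pos; [apply Rabs_pos|apply Rlt_le, Rinv_0_lt_compat; auto]). lra. }
  exists (S (Z.to_nat (up (Rabs C / eta)))). split; [lia|]. intros m Hm.
  assert (Hm1 : INR (Z.to_nat (up (Rabs C / eta))) + 1 <= INR m).
  { rewrite <- S_INR. apply le_INR. auto. }
  rewrite INR_IZR_INZ, Z2Nat.id in Hm1 by auto.
  assert (Hmpos : 0 < INR m) by (pose proof (Rabs_pos C); assert (0 <= Rabs C / eta) by (apply Rmult_le_pos; [apply Rabs_pos|apply Rlt_le, Rinv_0_lt_compat; auto]); lra).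
  apply (Rmult_le_reg_r (INR m)); auto. unfold Rdiv. rewrite Rmult_assoc, Rinv_l by lra.
  pose proof (Rle_abs C).
  assert (Rabs C <= eta * (Rabs C / eta)) by (right; field; lra).
  nra.
Qed.

Lemma fin_eventually (l : nat) (P : nat -> nat -> Prop) :
  (forall p, (p < l)%nat -> exists m0, forall m, (m0 <= m)%nat -> P p m) ->
  exists m0, forall m, (m0 <= m)%nat -> forall p, (p < l)%nat -> P p m.
Proof.
  induction l; intros H.
  - exists O. intros; lia.
  - destruct IHl as [m1 H1]. { intros. apply H. lia. }
    destruct (H l ltac:(lia)) as [m2 H2].
    exists (Nat.max m1 m2). intros m Hm p Hp.
    destruct (Nat.eq_dec p l) as [->|]; [apply H2; lia|apply H1; lia].
Qed.

Lemma vsum_split_vec (a b : nat) (f : nat -> vec) :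
  vsum (a + b) f = vadd (vsum a f) (vsum b (fun j => f (a + j)%nat)).
Proof.
  induction b.
  - rewrite Nat.add_0_r. simpl. vext.
  - rewrite Nat.add_succ_r. simpl. rewrite IHb. vext.
Qed.

Lemma split_bound (n N l : nat) (w : nat -> vec) : (l < N)%nat ->
  vnorm n (w l) <= vnorm n (vsum N w) + Rsum l (fun p => vnorm n (w p))
                   + Rsum (N - l - 1) (fun j => vnorm n (w (l + 1 + j)%nat)).
Proof.
  intros Hl.
  assert (E : vsum N w = vadd (vadd (vsum l w) (w l)) (vsum (N - l - 1) (fun j => w (S l + j)%nat))).
  { replace N with (S l + (N - l - 1))%nat at 1 by lia. rewrite vsum_split_vec. reflexivity. }
  assert (E2 : w l = vsub (vsub (vsum N w) (vsum l w)) (vsum (N - l - 1) (fun j => w (S l + j)%nat))).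
  { rewrite E. generalize (vsum l w) (w l) (vsum (N - l - 1) (fun j => w (S l + j)%nat)).
    intros. vext. }
  rewrite E2 at 1.
  eapply Rle_trans; [apply vnorm_sub_le|].
  eapply Rle_trans. { apply Rplus_le_compat_r. apply vnorm_sub_le. }
  pose proof (vnorm_vsum n l w). pose proof (vnorm_vsum n (N - l - 1) (fun j => w (S l + j)%nat)).
  replace (fun j => vnorm n (w (l + 1 + j)%nat)) with (fun j => vnorm n (w (S l + j)%nat))
    by (apply functional_extensionality; intro j; f_equal; f_equal; lia).
  cbv beta in *. lra.
Qed.

Lemma series_terms_bounded (n : nat) (s : nat -> vec) (U : vec) :
  Vcv n (fun N => vsum (S N) s) U -> exists B, 0 <= B /\ forall p, vnorm n (s p) <= B.
Proof.
  intros Hv. destruct (Hv 1 ltac:(lra)) as [N0 HN].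
  exists (2 + Rsum (S N0) (fun p => vnorm n (s p))). split.
  { pose proof (Rsum_nonneg (S N0) (fun p => vnorm n (s p)) (fun p _ => vnorm_nonneg n (s p))). lra. }
  intros p. pose proof (Rsum_nonneg (S N0) (fun p => vnorm n (s p)) (fun p _ => vnorm_nonneg n (s p))).
  destruct (le_lt_dec p N0).
  - pose proof (Rsum_term_le (S N0) (fun p => vnorm n (s p)) p (fun p _ => vnorm_nonneg n (s p)) ltac:(lia)).
    lra.
  - destruct p as [|p]; [lia|].
    pose proof (HN (S p) ltac:(lia)). pose proof (HN p ltac:(lia)).
    replace (s (S p)) with (vsub (vsub (vsum (S (S p)) s) U) (vsub (vsum (S p) s) U))
      by (simpl; vext).
    eapply Rle_trans; [apply vnorm_sub_le|]. lra.
Qed.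

Lemma fact_mul_le (k j : nat) : INR (fact k) * INR (fact j) <= INR (fact (k + j)).
Proof.
  rewrite <- mult_INR. apply le_INR. induction j.
  - rewrite Nat.add_0_r. simpl. lia.
  - rewrite Nat.add_succ_r. simpl fact.
    assert (fact k * fact j <= fact (k + j))%nat by auto.
    nia.
Qed.

Lemma tail_exp (x : R) (k J : nat) : 0 <= x ->
  Rsum J (fun j => x ^ (k + j) / INR (fact (k + j))) <= x ^ k / INR (fact k) * exp x.
Proof.
  intros Hx.
  eapply Rle_trans with (Rsum J (fun j => x ^ k / INR (fact k) * (x ^ j / INR (fact j)))).
  - apply Rsum_le. intros j _. rewrite pow_add.
    assert (Hk : 0 < INR (fact k)) by (apply lt_0_INR, lt_O_fact).
    assert (Hj : 0 < INR (fact j)) by (apply lt_0_INR, lt_O_fact).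
    pose proof (fact_mul_le k j).
    assert (0 <= x ^ k * x ^ j) by (apply Rmult_le_pos; apply pow_le; auto).
    replace (x ^ k / INR (fact k) * (x ^ j / INR (fact j))) with ((x ^ k * x ^ j) / (INR (fact k) * INR (fact j)))
      by (field; lra).
    unfold Rdiv. apply Rmult_le_compat_l; auto.
    apply Rinv_le_contravar; auto. apply Rmult_lt_0_compat; auto.
  - rewrite Rsum_scal. apply Rmult_le_compat_l.
    + apply Rmult_le_pos; [apply pow_le; auto|]. apply Rlt_le, Rinv_0_lt_compat, lt_0_INR, lt_O_fact.
    + destruct J.
      * simpl. pose proof (exp_pos x). lra.
      * apply Rsum_exp; auto.
Qed.


Section Main.
Variables (n : nat) (A0 A1 : mat) (u0 : vec) (t : R) (u : Cx -> vec) (c : nat -> vec) (mu a : R).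
Hypothesis Ht : 0 <= t.
Hypothesis Hu : forall e, mexp_apply n (mscal (RtoC t) (madd A0 (mscal e A1))) u0 (u e).
Hypothesis Hc : forall e, Vcv n (fun N => vsum (S N) (fun l => vscal (Cpow e l) (c l))) (u e).
Hypothesis Hmu : is_lognorm n A0 mu.
Hypothesis HA1 : is_opnorm n A1 a.

Local Notation K0 := (Kmat n A0).
Definition Me (e : Cx) : mat := mscal (RtoC t) (madd A0 (mscal e A1)).
Definition Dm (m l : nat) : vec := dd n A0 A1 (t / INR m) u0 m l.

Lemma Stp_Sop (e : Cx) (m : nat) : Stp n (Me e) (/ INR m) = Sop n A0 A1 (t / INR m) e.
Proof.
  apply functional_extensionality; intro x. unfold Stp, Sop, Gop, Fop, Me.
  rewrite mapply_mscal, mapply_madd, mapply_mscal. apply functional_extensionality; intro; apply Cx_ext; cxsimpl; unfold Rdiv; ring.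
Qed.

Lemma E_expand (e : Cx) (m L : nat) : (m < L)%nat ->
  Nat.iter m (Stp n (Me e) (/ INR m)) u0 = vsum L (fun l => vscal (Cpow e l) (Dm m l)).
Proof. intros. rewrite Stp_Sop. apply dd_expand. auto. Qed.

Lemma euler_u (e : Cx) (m : nat) : (1 <= m)%nat ->
  vnorm n (vsub (u e) (Nat.iter m (Stp n (Me e) (/ INR m)) u0))
  <= exp (4 * Kmat n (Me e)) / (2 * INR m) * vnorm n u0.
Proof.
  intros Hm. apply Rle_plus_epsilon. intros eps Heps.
  destruct (Hu e eps Heps) as [N0 HN].
  set (N := Nat.max N0 m).
  eapply Rle_trans; [apply (vnorm_sub_tri n _ (vsum (S N) (fun j => vscal (RtoC (/ INR (fact j))) (mapply n (mpow n (Me e) j) u0))))|].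
  pose proof (HN N ltac:(lia)). rewrite vnorm_sub_sym in H.
  pose proof (euler_err n (Me e) u0 m N Hm ltac:(lia)). unfold Me in *. lra.
Qed.

Lemma Gstep (h : R) (x : vec) : 0 <= h ->
  vnorm n (Gop n A0 h x) <= exp (h * mu + h ^ 2 * K0 ^ 2 / 2) * vnorm n x.
Proof.
  intros Hh. apply sq_le.
  { apply Rmult_le_pos; [apply Rlt_le, exp_pos|apply vnorm_nonneg]. }
  rewrite vnorm_sq. unfold Gop.
  rewrite !rip_addl, !rip_addr, !rip_scall, !rip_scalr.
  pose proof (lognorm_bound n A0 mu Hmu x) as Hl. cbv beta in Hl.
  pose proof (mapply_bound n A0 x) as Hb. pose proof (vnorm_nonneg n (mapply n A0 x)).
  pose proof (vnorm_nonneg n x). pose proof (Kmat_nonneg n A0).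
  assert (Hsq : rip n (mapply n A0 x) (mapply n A0 x) <= K0 ^ 2 * rip n x x).
  { rewrite <- !vnorm_sq. rewrite <- Rpow_mult_distr. apply pow_incr. split; auto. }
  rewrite (rip_sym n x (mapply n A0 x)).
  assert (Hx2 : 0 <= rip n x x) by apply rip_xx_nonneg.
  assert (E : (exp (h * mu + h ^ 2 * K0 ^ 2 / 2) * vnorm n x) ^ 2
              = exp (2 * h * mu + h ^ 2 * K0 ^ 2) * rip n x x).
  { rewrite Rpow_mult_distr, vnorm_sq. f_equal. rewrite exp_pow_INR. f_equal. simpl. field. }
  rewrite E.
  pose proof (exp_ineq1_le (2 * h * mu + h ^ 2 * K0 ^ 2)).
  assert (h * rip n (mapply n A0 x) x <= h * (mu * rip n x x)) by (apply Rmult_le_compat_l; auto).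
  assert (h * (h * rip n (mapply n A0 x) (mapply n A0 x)) <= h * (h * (K0 ^ 2 * rip n x x)))
    by (apply Rmult_le_compat_l; auto; apply Rmult_le_compat_l; auto).
  assert ((1 + (2 * h * mu + h ^ 2 * K0 ^ 2)) * rip n x x <= exp (2 * h * mu + h ^ 2 * K0 ^ 2) * rip n x x)
    by (apply Rmult_le_compat_r; auto).
  nra.
Qed.

Lemma a_nonneg : 0 <= a.
Proof. apply (opnorm_nonneg n A1). auto. Qed.

Lemma D_bound (m l : nat) : (1 <= m)%nat ->
  vnorm n (Dm m l) <= (t * a) ^ l / INR (fact l)
     * exp ((INR m - INR l) * (t / INR m * mu + (t / INR m) ^ 2 * K0 ^ 2 / 2)) * vnorm n u0.
Proof.
  intros Hm. set (h := t / INR m).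
  assert (Hmpos : 0 < INR m) by (apply lt_0_INR; lia).
  assert (Hh : 0 <= h) by (unfold h; apply Rmult_le_pos; auto; apply Rlt_le, Rinv_0_lt_compat; auto).
  set (g := h * mu + h ^ 2 * K0 ^ 2 / 2).
  pose proof a_nonneg as Ha.
  pose proof (dd_bound n A0 A1 h u0 (exp g) a m l (exp_pos g) Hh Ha (fun x => Gstep h x Hh)
                (fun x => opnorm_bound n A1 a x HA1)) as Hd.
  unfold Dm. fold h. eapply Rle_trans; [exact Hd|].
  pose proof (vnorm_nonneg n u0).
  rewrite exp_pow_INR.
  unfold Rdiv at 1. rewrite Rpow_mult_distr, Rpow_mult_distr, <- Rinv_pow by (apply Rgt_not_eq, exp_pos).
  rewrite exp_pow_INR, <- exp_Ropp.
  replace (binomR m l * exp (INR m * g) * (h ^ l * a ^ l * exp (- (INR l * g))) * vnorm n u0)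
    with ((binomR m l * h ^ l) * a ^ l * (exp (INR m * g) * exp (- (INR l * g))) * vnorm n u0) by ring.
  rewrite <- exp_plus.
  replace (INR m * g + - (INR l * g)) with ((INR m - INR l) * g) by ring.
  rewrite Rpow_mult_distr.
  replace (t ^ l * a ^ l / INR (fact l) * exp ((INR m - INR l) * g) * vnorm n u0)
    with ((t ^ l / INR (fact l)) * a ^ l * exp ((INR m - INR l) * g) * vnorm n u0) by (unfold Rdiv; ring).
  pose proof (binom_h m l t Hm Ht). fold h in H0.
  apply Rmult_le_compat_r; auto. apply Rmult_le_compat_r; [apply Rlt_le, exp_pos|].
  apply Rmult_le_compat_r; auto. apply pow_le; auto.
Qed.

End Main.


Lemma exp_mono (x y : R) : x <= y -> exp x <= exp y.
Proof. intros [H|H]; [apply Rlt_le, exp_increasing; auto|subst; lra]. Qed.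

Lemma term_le_exp (x : R) (l : nat) : 0 <= x -> x ^ l / INR (fact l) <= exp x.
Proof.
  intros Hx. eapply Rle_trans; [|apply (Rsum_exp l x Hx)].
  apply (Rsum_term_le (S l) (fun j => x ^ j / INR (fact j)) l); [|lia].
  intros. apply Rmult_le_pos; [apply pow_le; auto|]. apply Rlt_le, Rinv_0_lt_compat, lt_0_INR, lt_O_fact.
Qed.

Lemma geom_le (r : R) (J : nat) : 0 <= r <= 1/2 -> Rsum J (fun j => r ^ j) <= 2 - 2 * r ^ J.
Proof.
  intros Hr. induction J; simpl; [lra|].
  assert (0 <= r ^ J) by (apply pow_le; lra). nra.
Qed.

Section Main2.
Variables (n : nat) (A0 A1 : mat) (u0 : vec) (t : R) (u : Cx -> vec) (c : nat -> vec) (mu a : R).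
Hypothesis Ht : 0 <= t.
Hypothesis Hu : forall e, mexp_apply n (mscal (RtoC t) (madd A0 (mscal e A1))) u0 (u e).
Hypothesis Hc : forall e, Vcv n (fun N => vsum (S N) (fun l => vscal (Cpow e l) (c l))) (u e).
Hypothesis Hmu : is_lognorm n A0 mu.
Hypothesis HA1 : is_opnorm n A1 a.

Local Notation K0 := (Kmat n A0).
Local Notation Dm := (Dm n A0 A1 u0 t).

Definition Ub : R := exp (t * a) * exp (t * Rabs mu + t ^ 2 * K0 ^ 2 / 2) * vnorm n u0.

Lemma Ub_nonneg : 0 <= Ub.
Proof.
  unfold Ub. apply Rmult_le_pos; [apply Rmult_le_pos; apply Rlt_le, exp_pos|apply vnorm_nonneg].
Qed.

Lemma D_unif (m l : nat) : (1 <= m)%nat -> vnorm n (Dm m l) <= Ub.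
Proof.
  intros Hm. pose proof Ub_nonneg.
  destruct (le_lt_dec l m) as [Hlm|Hlm].
  2:{ unfold Dm. rewrite dd_zero by auto. rewrite vnorm_zero. auto. }
  eapply Rle_trans; [apply (D_bound n A0 A1 u0 t mu a Ht Hmu HA1 m l Hm)|].
  unfold Ub. pose proof (vnorm_nonneg n u0).
  pose proof (a_nonneg n A1 a HA1) as Ha.
  apply Rmult_le_compat_r; auto.
  apply Rmult_le_compat.
  - apply Rmult_le_pos; [apply pow_le; nra|]. apply Rlt_le, Rinv_0_lt_compat, lt_0_INR, lt_O_fact.
  - apply Rlt_le, exp_pos.
  - apply term_le_exp. nra.
  - apply exp_mono.
    assert (Hmpos : 0 < INR m) by (apply lt_0_INR; lia).
    apply le_INR in Hlm. pose proof (pos_INR l).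
    set (h := t / INR m).
    assert (Hh : INR m * h = t) by (unfold h; field; lra).
    assert (Hh0 : 0 <= h) by (unfold h; apply Rmult_le_pos; auto; apply Rlt_le, Rinv_0_lt_compat; auto).
    assert (Hs : 0 <= INR m - INR l <= INR m) by lra.
    pose proof (Rle_abs mu). pose proof (Kmat_nonneg n A0).
    assert (Hq1 : (INR m - INR l) * (h * mu) <= t * Rabs mu).
    { rewrite <- Hh. assert (h * mu <= h * Rabs mu) by (apply Rmult_le_compat_l; auto).
      assert (0 <= h * Rabs mu) by (apply Rmult_le_pos; auto; apply Rabs_pos).
      assert ((INR m - INR l) * (h * mu) <= (INR m - INR l) * (h * Rabs mu)) by (apply Rmult_le_compat_l; lra).
      assert ((INR m - INR l) * (h * Rabs mu) <= INR m * (h * Rabs mu)) by (apply Rmult_le_compat_r; lra).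
      lra. }
    assert (Hq2 : (INR m - INR l) * (h ^ 2 * K0 ^ 2 / 2) <= t ^ 2 * K0 ^ 2 / 2).
    { assert (0 <= h ^ 2 * K0 ^ 2 / 2) by (apply Rmult_le_pos; [apply Rmult_le_pos; apply pow2_ge_0|lra]).
      assert ((INR m - INR l) * (h ^ 2 * K0 ^ 2 / 2) <= INR m * (h ^ 2 * K0 ^ 2 / 2)) by (apply Rmult_le_compat_r; lra).
      assert (INR m * (h ^ 2 * K0 ^ 2 / 2) <= INR m * INR m * (h ^ 2 * K0 ^ 2 / 2)).
      { rewrite Rmult_assoc. rewrite <- (Rmult_1_l (INR m * _)) at 1. apply Rmult_le_compat_r.
        - apply Rmult_le_pos; lra.
        - apply (le_INR 1) in Hm. simpl in Hm. lra. }
      replace (t ^ 2 * K0 ^ 2 / 2) with (INR m * INR m * (h ^ 2 * K0 ^ 2 / 2)) by (rewrite <- Hh; field).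
      lra. }
    rewrite Rmult_plus_distr_l. fold h. lra.
Qed.

Lemma D_lim (m l : nat) : (1 <= m)%nat ->
  (INR l * t * Rabs mu + t ^ 2 * K0 ^ 2 / 2) / INR m <= 1/2 ->
  vnorm n (Dm m l) <= (t * a) ^ l / INR (fact l) * exp (t * mu) *
     (1 + 2 * ((INR l * t * Rabs mu + t ^ 2 * K0 ^ 2 / 2) / INR m)) * vnorm n u0.
Proof.
  intros Hm Hsmall.
  set (C := INR l * t * Rabs mu + t ^ 2 * K0 ^ 2 / 2) in *.
  eapply Rle_trans; [apply (D_bound n A0 A1 u0 t mu a Ht Hmu HA1 m l Hm)|].
  pose proof (vnorm_nonneg n u0). pose proof (a_nonneg n A1 a HA1) as Ha.
  assert (HX : 0 <= (t * a) ^ l / INR (fact l)).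
  { apply Rmult_le_pos; [apply pow_le; nra|]. apply Rlt_le, Rinv_0_lt_compat, lt_0_INR, lt_O_fact. }
  apply Rmult_le_compat_r; auto. rewrite Rmult_assoc. apply Rmult_le_compat_l; auto.
  assert (Hmpos : 0 < INR m) by (apply lt_0_INR; lia).
  pose proof (pos_INR l). pose proof (Rle_abs mu). pose proof (Rle_abs (- mu)). rewrite Rabs_Ropp in *.
  pose proof (Kmat_nonneg n A0).
  assert (HC0 : 0 <= C / INR m).
  { unfold C. apply Rmult_le_pos; [|apply Rlt_le, Rinv_0_lt_compat; auto].
    assert (0 <= INR l * t * Rabs mu) by (apply Rmult_le_pos; [apply Rmult_le_pos|apply Rabs_pos]; auto).
    assert (0 <= t ^ 2 * K0 ^ 2 / 2) by (apply Rmult_le_pos; [apply Rmult_le_pos; apply pow2_ge_0|lra]). lra. }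
  eapply Rle_trans with (exp (t * mu + C / INR m)).
  - apply exp_mono.
    set (h := t / INR m).
    assert (Hh : INR m * h = t) by (unfold h; field; lra).
    assert (Hh0 : 0 <= h) by (unfold h; apply Rmult_le_pos; auto; apply Rlt_le, Rinv_0_lt_compat; auto).
    assert (EC : C / INR m = INR l * h * Rabs mu + INR m * h ^ 2 * K0 ^ 2 / 2).
    { unfold C, h. field. lra. }
    rewrite EC. fold h.
    assert (- (INR l * h * mu) <= INR l * h * Rabs mu).
    { replace (- (INR l * h * mu)) with (INR l * h * (- mu)) by ring.
      apply Rmult_le_compat_l; [apply Rmult_le_pos|]; auto. }
    assert (- INR l * (h ^ 2 * K0 ^ 2 / 2) <= 0).
    { assert (0 <= INR l * (h ^ 2 * K0 ^ 2 / 2)) by (apply Rmult_le_pos; auto; apply Rmult_le_pos; [apply Rmult_le_pos; apply pow2_ge_0|lra]). lra. }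
    replace ((INR m - INR l) * (h * mu + h ^ 2 * K0 ^ 2 / 2))
      with (INR m * h * mu - INR l * h * mu + INR m * h ^ 2 * K0 ^ 2 / 2 - INR l * (h ^ 2 * K0 ^ 2 / 2)) by field.
    rewrite Hh. lra.
  - rewrite exp_plus. apply Rmult_le_compat_l; [apply Rlt_le, exp_pos|]. apply exp_small. lra.
Qed.

End Main2.


Section Main3.
Variables (n : nat) (A0 A1 : mat) (u0 : vec) (t : R) (u : Cx -> vec) (c : nat -> vec) (mu a : R).
Hypothesis Ht : 0 <= t.
Hypothesis Hu : forall e, mexp_apply n (mscal (RtoC t) (madd A0 (mscal e A1))) u0 (u e).
Hypothesis Hc : forall e, Vcv n (fun N => vsum (S N) (fun l => vscal (Cpow e l) (c l))) (u e).
Hypothesis Hmu : is_lognorm n A0 mu.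
Hypothesis HA1 : is_opnorm n A1 a.

Local Notation K0 := (Kmat n A0).
Local Notation Dm := (Dm n A0 A1 u0 t).
Local Notation Ub := (Ub n A0 u0 t mu a).

Lemma c_bounded : exists Bc, 0 <= Bc /\ forall p, vnorm n (c p) <= Bc.
Proof.
  destruct (series_terms_bounded n _ _ (Hc (RtoC 1))) as [B [HB HBp]].
  exists B. split; auto. intros p. specialize (HBp p).
  rewrite vnorm_scal, Cmod_Cpow, Cmod_RtoC, Rabs_R1, pow1, Rmult_1_l in HBp. auto.
Qed.

Lemma ident (l : nat) : forall eta, 0 < eta ->
  exists m0, (1 <= m0)%nat /\ forall m, (m0 <= m)%nat -> vnorm n (vsub (c l) (Dm m l)) <= eta.
Proof.
  induction l as [l IH] using (well_founded_induction lt_wf).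
  intros eta Heta.
  destruct c_bounded as [Bc [HBc HcB]].
  pose proof (Ub_nonneg n A0 u0 t mu a) as HUb.
  set (W := Ub + Bc).
  assert (HW : 0 <= W) by (unfold W; lra).
  set (r := Rmin (1/2) (eta / (4 * W + 4))).
  assert (Hr0 : 0 < r) by (apply Rmin_pos; [lra|apply Rdiv_lt_0_compat; lra]).
  assert (Hr1 : r <= 1/2) by apply Rmin_l.
  assert (Hr2 : 2 * W * r <= eta / 2).
  { assert (r <= eta / (4 * W + 4)) by apply Rmin_r.
    assert (eta / (4 * W + 4) * (4 * W + 4) = eta) by (field; lra).
    assert (2 * W * r * 2 <= eta); [|lra].
    assert (r * (4 * W + 4) <= eta / (4 * W + 4) * (4 * W + 4)) by (apply Rmult_le_compat_r; lra).
    nra. }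
  assert (Hrl : 0 < r ^ l) by (apply pow_lt; auto).
  set (e := RtoC r).
  destruct (arch_inv (exp (4 * Kmat n (Me A0 A1 t e)) * vnorm n u0 / 2) (r ^ l * eta / 4)) as [m1 [Hm1 Hm1b]].
  { apply Rmult_lt_0_compat; [|lra]. apply Rmult_lt_0_compat; auto. }
  set (delta := r ^ l * eta / (4 * (INR l + 1))).
  assert (Hdelta : 0 < delta).
  { unfold delta. apply Rdiv_lt_0_compat; [apply Rmult_lt_0_compat; auto|]. pose proof (pos_INR l). lra. }
  destruct (fin_eventually l (fun p m => vnorm n (vsub (c p) (Dm m p)) <= delta)) as [m2 Hm2].
  { intros p Hp. destruct (IH p Hp delta Hdelta) as [m0 [_ Hm0]]. exists m0. auto. }
  exists (Nat.max m1 m2). split; [lia|]. intros m Hm.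
  assert (Hm1' : (1 <= m)%nat) by lia.
  assert (Hmpos : 0 < INR m) by (apply lt_0_INR; lia).
  apply (Rmult_le_reg_l (r ^ l)); auto.
  apply Rle_plus_epsilon. intros eps Heps.
  destruct (Hc e eps Heps) as [N0 HN0].
  set (N := Nat.max N0 (Nat.max m l)).
  set (w := fun p => vscal (Cpow e p) (vsub (c p) (Dm m p))).
  assert (Hw : forall p, vnorm n (w p) = r ^ p * vnorm n (vsub (c p) (Dm m p))).
  { intros p. unfold w. rewrite vnorm_scal, Cmod_Cpow. unfold e. rewrite Cmod_RtoC, Rabs_pos_eq; lra. }
  pose proof (split_bound n (S N) l w ltac:(lia)) as Hsb.
  rewrite Hw in Hsb.
  rewrite (Rsum_ext l _ (fun p => r ^ p * vnorm n (vsub (c p) (Dm m p)))) in Hsb by (intros; apply Hw).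
  rewrite (Rsum_ext (S N - l - 1) _ (fun j => r ^ (l + 1 + j) * vnorm n (vsub (c (l + 1 + j)%nat) (Dm m (l + 1 + j)%nat)))) in Hsb by (intros; apply Hw).
  assert (Hsum : vnorm n (vsum (S N) w) <= eps + r ^ l * eta / 4).
  { assert (E : vsum (S N) w = vsub (vsum (S N) (fun p => vscal (Cpow e p) (c p)))
                                    (Nat.iter m (Stp n (Me A0 A1 t e) (/ INR m)) u0)).
    { rewrite (E_expand n A0 A1 u0 t e m (S N)) by lia. rewrite vsub_vsum. apply vsum_ext.
      intros. unfold w. vext. }
    rewrite E. eapply Rle_trans; [apply (vnorm_sub_tri n _ (u e))|].
    pose proof (HN0 N ltac:(lia)).
    pose proof (euler_u n A0 A1 u0 t u Hu e m Hm1').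
    pose proof (Hm1b m ltac:(lia)).
    assert (exp (4 * Kmat n (Me A0 A1 t e)) / (2 * INR m) * vnorm n u0 =
            exp (4 * Kmat n (Me A0 A1 t e)) * vnorm n u0 / 2 / INR m) by (field; lra).
    lra. }
  assert (Hhead : Rsum l (fun p => r ^ p * vnorm n (vsub (c p) (Dm m p))) <= r ^ l * eta / 4).
  { eapply Rle_trans with (Rsum l (fun _ => delta)).
    - apply Rsum_le. intros p Hp.
      assert (r ^ p <= 1) by (rewrite <- (pow1 p); apply pow_incr; lra).
      pose proof (Hm2 m ltac:(lia) p Hp). pose proof (vnorm_nonneg n (vsub (c p) (Dm m p))).
      assert (0 <= r ^ p) by (apply pow_le; lra). nra.
    - assert (E : forall k, Rsum k (fun _ => delta) = INR k * delta).
      { induction k; simpl Rsum; [simpl; ring|]. rewrite IHk, S_INR. ring. }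
      rewrite E. unfold delta. pose proof (pos_INR l).
      apply (Rmult_le_reg_r (4 * (INR l + 1))); [lra|].
      replace (INR l * (r ^ l * eta / (4 * (INR l + 1))) * (4 * (INR l + 1))) with (INR l * (r ^ l * eta)) by (field; lra).
      replace (r ^ l * eta / 4 * (4 * (INR l + 1))) with ((INR l + 1) * (r ^ l * eta)) by field.
      apply Rmult_le_compat_r; [|lra]. apply Rmult_le_pos; lra. }
  assert (Htail : Rsum (S N - l - 1) (fun j => r ^ (l + 1 + j) * vnorm n (vsub (c (l + 1 + j)%nat) (Dm m (l + 1 + j)%nat)))
                  <= r ^ l * (2 * W * r)).
  { eapply Rle_trans with (Rsum (S N - l - 1) (fun j => r ^ l * r * W * r ^ j)).
    - apply Rsum_le. intros j _.
      replace (r ^ (l + 1 + j)) with (r ^ l * r * r ^ j) by (rewrite !pow_add; simpl; ring).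
      assert (vnorm n (vsub (c (l + 1 + j)%nat) (Dm m (l + 1 + j)%nat)) <= W).
      { eapply Rle_trans; [apply vnorm_sub_le|]. pose proof (HcB (l + 1 + j)%nat).
        pose proof (D_unif n A0 A1 u0 t mu a Ht Hmu HA1 m (l + 1 + j) Hm1'). unfold W. lra. }
      assert (0 <= r ^ l * r * r ^ j).
      { apply Rmult_le_pos; [apply Rmult_le_pos; [apply pow_le|]|apply pow_le]; lra. }
      replace (r ^ l * r * W * r ^ j) with (r ^ l * r * r ^ j * W) by ring.
      apply Rmult_le_compat_l; auto.
    - rewrite Rsum_scal. pose proof (geom_le r (S N - l - 1) ltac:(lra)).
      assert (0 <= r ^ (S N - l - 1)) by (apply pow_le; lra).
      assert (0 <= r ^ l * r * W) by (apply Rmult_le_pos; [apply Rmult_le_pos|]; lra).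
      assert (r ^ l * r * W * Rsum (S N - l - 1) (fun j => r ^ j) <= r ^ l * r * W * 2)
        by (apply Rmult_le_compat_l; lra).
      eapply Rle_trans; [exact H2|]. right; ring. }
  assert (r ^ l * (2 * W * r) <= r ^ l * (eta / 2)) by (apply Rmult_le_compat_l; lra).
  lra.
Qed.

Lemma c_bound (l : nat) : vnorm n (c l) <= (t * a) ^ l / INR (fact l) * exp (t * mu) * vnorm n u0.
Proof.
  apply Rle_plus_epsilon. intros dl Hdl.
  set (Y := (t * a) ^ l / INR (fact l) * exp (t * mu) * vnorm n u0).
  pose proof (a_nonneg n A1 a HA1) as Ha.
  assert (HY : 0 <= Y).
  { unfold Y. apply Rmult_le_pos; [apply Rmult_le_pos|apply vnorm_nonneg].
    - apply Rmult_le_pos; [apply pow_le; nra|]. apply Rlt_le, Rinv_0_lt_compat, lt_0_INR, lt_O_fact.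
    - apply Rlt_le, exp_pos. }
  set (C := INR l * t * Rabs mu + t ^ 2 * K0 ^ 2 / 2).
  destruct (ident l (dl / 2) ltac:(lra)) as [m0 [Hm0 Hid]].
  destruct (arch_inv C (Rmin (1/2) (dl / (4 * Y + 4)))) as [m1 [Hm1 Hm1b]].
  { apply Rmin_pos; [lra|]. apply Rdiv_lt_0_compat; lra. }
  set (m := Nat.max m0 m1).
  assert (Hm : (1 <= m)%nat) by lia.
  specialize (Hm1b m ltac:(lia)).
  assert (Hs1 : C / INR m <= 1/2) by (eapply Rle_trans; [exact Hm1b|apply Rmin_l]).
  assert (Hs2 : C / INR m <= dl / (4 * Y + 4)) by (eapply Rle_trans; [exact Hm1b|apply Rmin_r]).
  pose proof (D_lim n A0 A1 u0 t mu a Ht Hmu HA1 m l Hm Hs1) as HD. fold C in HD.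
  pose proof (Hid m ltac:(lia)) as Hcd.
  replace (c l) with (vadd (vsub (c l) (Dm m l)) (Dm m l)) by vext.
  eapply Rle_trans; [apply vnorm_triangle|].
  assert (HD' : vnorm n (Dm m l) <= Y + Y * (2 * (C / INR m))).
  { eapply Rle_trans; [exact HD|]. unfold Y. right. ring. }
  assert (Y * (2 * (C / INR m)) <= dl / 2).
  { assert (Y * (2 * (C / INR m)) <= Y * (2 * (dl / (4 * Y + 4)))) by (apply Rmult_le_compat_l; lra).
    assert (Y * (2 * (dl / (4 * Y + 4))) <= dl / 2).
    { replace (Y * (2 * (dl / (4 * Y + 4)))) with (dl / 2 * (4 * Y / (4 * Y + 4))) by (field; lra).
      assert (4 * Y / (4 * Y + 4) <= 1).
      { apply (Rmult_le_reg_r (4 * Y + 4)); [lra|]. unfold Rdiv. rewrite Rmult_assoc, Rinv_l by lra. lra. }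
      assert (0 <= 4 * Y / (4 * Y + 4)) by (apply Rmult_le_pos; [lra|apply Rlt_le, Rinv_0_lt_compat; lra]).
      nra. }
    lra. }
  lra.
Qed.

End Main3.


Lemma ta_le (n : nat) (A1 : mat) (t a b : R) : 0 <= t -> is_opnorm n A1 a ->
  is_opnorm n (mscal (RtoC t) A1) b -> t * a <= b.
Proof.
  intros Ht HA Hb. destruct (Req_dec t 0) as [->|Ht0].
  - rewrite Rmult_0_l. apply (opnorm_nonneg n _ _ Hb).
  - assert (Htp : 0 < t) by lra.
    assert (a <= b / t).
    { destruct HA as [_ Hl]. apply Hl. intros r [x [Hx ->]].
      destruct Hb as [Hub _].
      assert (vnorm n (mapply n (mscal (RtoC t) A1) x) <= b) by (apply Hub; exists x; auto).
      rewrite mapply_mscal, vnorm_scal, Cmod_RtoC, Rabs_pos_eq in H by lra.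
      apply (Rmult_le_reg_l t); auto. unfold Rdiv. rewrite <- Rmult_assoc, (Rmult_comm t b), Rmult_assoc, Rinv_r by lra. lra. }
    apply (Rmult_le_compat_l t) in H; [|lra]. unfold Rdiv in H.
    rewrite (Rmult_comm b), <- Rmult_assoc, Rinv_r, Rmult_1_l in H by lra. exact H.
Qed.

Theorem mainTheorem6 (n : nat) (A0 A1 : mat) (u0 : vec) (t : R) (eps : Cx) (k : nat)
  (u : Cx -> vec) (c : nat -> vec) (muA0 nA1 ntA1 : R)
  (Ht : 0 <= t) (Hk : (1 <= k)%nat)
  (Hu : forall e : Cx, mexp_apply n (mscal (RtoC t) (madd A0 (mscal e A1))) u0 (u e))
  (Hc : forall e : Cx, Vcv n (fun N => vsum (S N) (fun l => vscal (Cpow e l) (c l))) (u e))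
  (Hmu : is_lognorm n A0 muA0)
  (HA1 : is_opnorm n A1 nA1)
  (HtA1 : is_opnorm n (mscal (RtoC t) A1) ntA1) :
  vnorm n (vsub (u eps) (vsum k (fun l => vscal (Cpow eps l) (c l))))
  <= exp (t * (muA0 + Cmod eps * nA1)) * (Cmod eps * ntA1) ^ k / INR (fact k)
     * vnorm n u0.
Proof.
  pose proof (ta_le n A1 t nA1 ntA1 Ht HA1 HtA1) as Hta.
  pose proof (a_nonneg n A1 nA1 HA1) as Ha.
  pose proof (Cmod_nonneg eps) as He.
  pose proof (vnorm_nonneg n u0) as Hu0.
  set (x := Cmod eps * (t * nA1)).
  assert (Hx : 0 <= x) by (unfold x; apply Rmult_le_pos; auto; apply Rmult_le_pos; auto).
  apply Rle_plus_epsilon. intros eta Heta.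
  destruct (Hc eps eta Heta) as [N0 HN0].
  set (N := Nat.max N0 k).
  set (f := fun l => vscal (Cpow eps l) (c l)).
  assert (E : vsub (u eps) (vsum k f) =
              vadd (vsub (u eps) (vsum (S N) f)) (vsum (S N - k) (fun j => f (k + j)%nat))).
  { replace (S N) with (k + (S N - k))%nat at 1 by lia. rewrite vsum_split_vec.
    generalize (vsum k f) (vsum (S N - k) (fun j => f (k + j)%nat)). intros. vext. }
  fold f. rewrite E.
  eapply Rle_trans; [apply vnorm_triangle|].
  pose proof (HN0 N ltac:(lia)) as H1. rewrite vnorm_sub_sym in H1. fold f in H1.
  eapply Rle_trans. { apply Rplus_le_compat_l. apply vnorm_vsum. }
  assert (Htail : Rsum (S N - k) (fun j => vnorm n (f (k + j)%nat))
                  <= exp (t * muA0) * vnorm n u0 * (x ^ k / INR (fact k) * exp x)).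
  { eapply Rle_trans with (Rsum (S N - k) (fun j => exp (t * muA0) * vnorm n u0 * (x ^ (k + j) / INR (fact (k + j))))).
    - apply Rsum_le. intros j _. unfold f. rewrite vnorm_scal, Cmod_Cpow.
      pose proof (c_bound n A0 A1 u0 t u c muA0 nA1 Ht Hu Hc Hmu HA1 (k + j)) as Hcb.
      unfold x. rewrite !Rpow_mult_distr.
      assert (0 <= Cmod eps ^ (k + j)) by (apply pow_le; auto).
      eapply Rle_trans; [apply Rmult_le_compat_l; [auto|exact Hcb]|].
      right. rewrite Rpow_mult_distr. unfold Rdiv. ring.
    - rewrite Rsum_scal. apply Rmult_le_compat_l.
      + apply Rmult_le_pos; auto. apply Rlt_le, exp_pos.
      + apply tail_exp; auto. }
  assert (Hxk : x ^ k <= (Cmod eps * ntA1) ^ k).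
  { apply pow_incr. split; auto. unfold x. apply Rmult_le_compat_l; auto. }
  assert (Hexp : exp (t * muA0) * exp x = exp (t * (muA0 + Cmod eps * nA1))).
  { rewrite <- exp_plus. f_equal. unfold x. ring. }
  assert (Hf : 0 < INR (fact k)) by (apply lt_0_INR, lt_O_fact).
  assert (exp (t * muA0) * vnorm n u0 * (x ^ k / INR (fact k) * exp x)
          <= exp (t * (muA0 + Cmod eps * nA1)) * (Cmod eps * ntA1) ^ k / INR (fact k) * vnorm n u0).
  { rewrite <- Hexp.
    replace (exp (t * muA0) * vnorm n u0 * (x ^ k / INR (fact k) * exp x))
      with ((exp (t * muA0) * exp x * / INR (fact k) * vnorm n u0) * x ^ k) by (unfold Rdiv; ring).
    replace (exp (t * muA0) * exp x * (Cmod eps * ntA1) ^ k / INR (fact k) * vnorm n u0)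
      with ((exp (t * muA0) * exp x * / INR (fact k) * vnorm n u0) * (Cmod eps * ntA1) ^ k) by (unfold Rdiv; ring).
    apply Rmult_le_compat_l; auto.
    apply Rmult_le_pos; auto. apply Rmult_le_pos; [|apply Rlt_le, Rinv_0_lt_compat; auto].
    apply Rmult_le_pos; apply Rlt_le, exp_pos. }
  lra.
Qed.
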